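(* In a Fisher market in which every buyer has a Leontief utility function, run asynchronous tatonnement with update rule $p_j^{t+}=p_j^t(1+\lambda\min\{\tilde z_j,1\}(t-\tau_j))$, $0<\lambda\le\frac1{23.46}$, from strictly positive initial prices. Then for every $\epsilon>0$ there is a finite time $T_\epsilon$ such that for every good $j$, every $t\ge T_\epsilon$ and every $0\le\Delta t\le1$, $|p_j^t-p_j^{t+\Delta t}|\le\epsilon$.
   Context: A Fisher market has $n$ goods, each with supply $1$, and buyers $i$ with budgets $e_i>0$. At prices $p$, buyer $i$ demands a utility-maximizing bundle $(x_{ij}(p))_j$ of cost at most $e_i$; $x_j(p)=\sum_ix_{ij}(p)$, excess demand $z_j(p)=x_j(p)-1$. A Leontief utility is $u_i(x)=\min_{j\in S_i}b_{ij}x_{ij}$ for a nonempty set $S_i$ of goods and $b_{ij}>0$. Asynchronous tatonnement: continuous time $t\ge0$; each price $p_j$ changes only at discrete update times, no two updates simultaneous, consecutive updates to the same price at most one time unit apart; $p^t$ denotes current prices just before any update at time $t$, $p_j^{t+}$ the value just after. At an update to $p_j$ at time $t$, $\tau_j$ is the previous update time of $p_j$ ($0$ if none) and $\tilde z_j$ is any value between the minimum and maximum of $z_j(p^{t'})$ over $t'\in(\tau_j,t]$. *)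

(* Defs.v *)
From Stdlib Require Import Reals.
Open Scope R_scope.

Fixpoint rsum (k : nat) (f : nat -> R) : R :=
  match k with
  | O => 0
  | S k' => rsum k' f + f k'
  end.

Fixpoint leon_aux (S : nat -> bool) (b x : nat -> R) (k : nat) : option R :=
  match k with
  | O => None
  | Datatypes.S k' =>
      let r := leon_aux S b x k' in
      if S k' then
        Some (match r with
              | None => b k' * x k'
              | Some v => Rmin v (b k' * x k')
              end)
      else r
  end.

(* Leontief utility u(x) = min_{j in S, j < n} b_j x_j  (S nonempty in use) *)
Definition leontief (n : nat) (S : nat -> bool) (b x : nat -> R) : R :=
  match leon_aux S b x n with Some v => v | None => 0 end.

Definition cost (n : nat) (p x : nat -> R) : R := rsum n (fun j => p j * x j).

Definition nonneg_bundle (n : nat) (x : nat -> R) : Prop :=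
  forall j, (j < n)%nat -> 0 <= x j.

Definition leontief_demand (n : nat) (S : nat -> bool) (b : nat -> R) (e : R)
    (p x : nat -> R) : Prop :=
  nonneg_bundle n x /\ cost n p x <= e /\
  forall y, nonneg_bundle n y -> cost n p y <= e ->
    leontief n S b y <= leontief n S b x.

Definition excess (m : nat) (X : nat -> (nat -> R) -> nat -> R)
    (p : nat -> R) (j : nat) : R :=
  rsum m (fun i => X i p j) - 1.

(* Main.v *)
Require Import Defs.
From Stdlib Require Import Reals Lra Lia ClassicalEpsilon FunctionalExtensionality Classical.
Open Scope R_scope.

Lemma rsum_ext k f g : (forall i, (i < k)%nat -> f i = g i) -> rsum k f = rsum k g.
Proof. induction k; simpl; intros H; auto. rewrite IHk by (intros; apply H; lia). rewrite H by lia; auto. Qed.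

Lemma rsum_le k f g : (forall i, (i < k)%nat -> f i <= g i) -> rsum k f <= rsum k g.
Proof. induction k; simpl; intros H; [lra|]. assert (rsum k f <= rsum k g) by (apply IHk; intros; apply H; lia). specialize (H k ltac:(lia)). lra. Qed.

Lemma rsum_nonneg k f : (forall i, (i < k)%nat -> 0 <= f i) -> 0 <= rsum k f.
Proof. intros H. replace 0 with (rsum k (fun _ => 0)). apply rsum_le; auto. induction k; simpl; auto. rewrite IHk; [lra|]. intros; apply H; lia. Qed.

Lemma rsum_zero k : rsum k (fun _ => 0) = 0.
Proof. induction k; simpl; auto. rewrite IHk; lra. Qed.

Lemma rsum_plus k f g : rsum k (fun i => f i + g i) = rsum k f + rsum k g.
Proof. induction k; simpl; auto. lra. rewrite IHk; lra. Qed.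

Lemma rsum_minus k f g : rsum k (fun i => f i - g i) = rsum k f - rsum k g.
Proof. induction k; simpl; auto. lra. rewrite IHk; lra. Qed.

Lemma rsum_scal k c f : rsum k (fun i => c * f i) = c * rsum k f.
Proof. induction k; simpl; auto. lra. rewrite IHk; lra. Qed.

Lemma rsum_scal_r k c f : rsum k (fun i => f i * c) = rsum k f * c.
Proof. induction k; simpl; auto. lra. rewrite IHk; lra. Qed.

Lemma rsum_comm a b (f : nat -> nat -> R) :
  rsum a (fun x => rsum b (fun y => f x y)) = rsum b (fun y => rsum a (fun x => f x y)).
Proof.
  induction a; simpl. rewrite rsum_zero; auto.
  rewrite IHa. rewrite <- rsum_plus. auto.
Qed.

Lemma rsum_term_le k f i : (forall i, (i < k)%nat -> 0 <= f i) -> (i < k)%nat -> f i <= rsum k f.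
Proof.
  induction k; intros H Hi; [lia|]. simpl.
  assert (0 <= rsum k f) by (apply rsum_nonneg; intros; apply H; lia).
  destruct (Nat.eq_dec i k). subst; lra.
  assert (f i <= rsum k f) by (apply IHk; [intros; apply H; lia| lia]).
  specialize (H k ltac:(lia)); lra.
Qed.

Lemma rsum_abs k f : Rabs (rsum k f) <= rsum k (fun i => Rabs (f i)).
Proof. induction k; simpl. rewrite Rabs_R0; lra. eapply Rle_trans. apply Rabs_triang. lra. Qed.

Lemma rsum_upd k f j v : (j < k)%nat ->
  rsum k (fun i => if Nat.eqb i j then v else f i) = rsum k f - f j + v.
Proof.
  induction k; intros Hj; [lia|]. simpl.
  destruct (Nat.eq_dec j k).
  - subst. rewrite Nat.eqb_refl.
    rewrite (rsum_ext k _ f). lra. intros i Hi. destruct (Nat.eqb_spec i k); auto; lia.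
  - rewrite IHk by lia. destruct (Nat.eqb_spec k j); [lia|]. lra.
Qed.

Lemma rsum_le_eq k f g : (forall i, (i < k)%nat -> f i <= g i) -> rsum k g <= rsum k f ->
  forall i, (i < k)%nat -> f i = g i.
Proof.
  induction k; intros H Hs i Hi; [lia|]. simpl in Hs.
  assert (rsum k f <= rsum k g) by (apply rsum_le; intros; apply H; lia).
  assert (Hk := H k ltac:(lia)).
  assert (rsum k g <= rsum k f) by lra.
  destruct (Nat.eq_dec i k). subst; lra.
  apply IHk; [intros; apply H; lia | exact H1 | lia].
Qed.

Lemma rsum_range a b f : (a <= b)%nat ->
  rsum a f = rsum b (fun k => if Nat.ltb k a then f k else 0).
Proof.
  intros Hab. induction b.
  - assert (a = 0%nat) by lia. subst; auto.
  - destruct (Nat.eq_dec a (S b)).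
    + subst. apply rsum_ext. intros i Hi. destruct (Nat.ltb_spec i (S b)); auto; lia.
    + simpl. rewrite IHb by lia. destruct (Nat.ltb_spec b a); [lia|]. lra.
Qed.

Lemma ln_le_sub1 y : 0 < y -> ln y <= y - 1.
Proof. intros H. pose proof (exp_ineq1_le (ln y)). rewrite exp_ln in H0; lra. Qed.

Lemma ln_1p_lower y : -1/23 <= y -> y - 23/22 * (y*y) <= ln (1 + y).
Proof.
  intros H. assert (0 < 1 + y) by lra.
  pose proof (ln_le_sub1 (/ (1+y)) ltac:(apply Rinv_0_lt_compat; lra)).
  rewrite ln_Rinv in H1 by lra.
  assert (/(1+y) - 1 = - (y / (1+y))) by (field; lra).
  assert (y / (1+y) = y - y*y/(1+y)) by (field; lra).
  assert (y*y/(1+y) <= 23/22*(y*y)).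
  { apply Rmult_le_reg_r with (1+y); [lra|]. unfold Rdiv. rewrite Rmult_assoc, Rinv_l by lra.
    assert (0 <= y*y) by nra. nra. }
  lra.
Qed.

Definition Wt n (S:nat->bool) (b q : nat -> R) := rsum n (fun k => if S k then q k / b k else 0).

Lemma LA0 S b x K : leon_aux S b x K = None -> forall k, (k<K)%nat -> S k = false.
Proof.
  induction K; intros H k Hk; [lia|]. simpl in H. destruct (S K) eqn:E.
  destruct (leon_aux S b x K); discriminate.
  destruct (Nat.eq_dec k K). subst; auto. apply IHK; auto; lia.
Qed.

Lemma LA2 S b x K v : leon_aux S b x K = Some v -> forall k, (k<K)%nat -> S k = true -> v <= b k * x k.
Proof.
  revert v. induction K; intros v H k Hk HS; [lia|]. simpl in H.
  destruct (S K) eqn:E.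
  - destruct (leon_aux S b x K) as [r|] eqn:E2; inversion H; subst.
    + destruct (Nat.eq_dec k K). subst. apply Rmin_r.
      eapply Rle_trans. apply Rmin_l. apply IHK; auto; lia.
    + destruct (Nat.eq_dec k K). subst; lra.
      rewrite (LA0 S b x K E2 k) in HS by lia. discriminate.
  - destruct (Nat.eq_dec k K). subst; congruence. apply IHK; auto; lia.
Qed.

Lemma LA3 S b x K v : leon_aux S b x K = Some v -> exists k, (k<K)%nat /\ S k = true /\ v = b k * x k.
Proof.
  revert v. induction K; intros v H; simpl in H; [discriminate|].
  destruct (S K) eqn:E.
  - destruct (leon_aux S b x K) as [r|] eqn:E2; inversion H; subst.
    + unfold Rmin. destruct (Rle_dec r (b K * x K)).
      * destruct (IHK r eq_refl) as [k [? [? ?]]]. exists k; repeat split; auto; lia.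
      * exists K; repeat split; auto.
    + exists K; auto.
  - destruct (IHK v H) as [k [? [? ?]]]. exists k; repeat split; auto; lia.
Qed.

Lemma LA1 S b x K : (exists k, (k<K)%nat /\ S k = true) -> exists v, leon_aux S b x K = Some v.
Proof.
  induction K; intros [k [Hk HS]]; [lia|]. simpl.
  destruct (S K) eqn:E. destruct (leon_aux S b x K); eauto.
  apply IHK. exists k; split; auto. destruct (Nat.eq_dec k K); subst; [congruence|lia].
Qed.

Lemma Wt_pos n S b q : (exists j, (j<n)%nat /\ S j = true) -> (forall j, (j<n)%nat -> S j = true -> 0 < b j) ->
  (forall j, (j<n)%nat -> 0 < q j) -> 0 < Wt n S b q.
Proof.
  intros [j [Hj HS]] Hb Hq. unfold Wt.
  eapply Rlt_le_trans; [|apply (rsum_term_le n _ j)].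
  cbv beta. rewrite HS. apply Rdiv_lt_0_compat; auto.
  intros i Hi. destruct (S i) eqn:E; [|lra]. apply Rlt_le, Rdiv_lt_0_compat; auto.
  auto.
Qed.

Lemma demand_formula n S b e q x :
  (exists j, (j<n)%nat /\ S j = true) -> (forall j, (j<n)%nat -> S j = true -> 0 < b j) -> 0 < e ->
  (forall j, (j<n)%nat -> 0 < q j) -> leontief_demand n S b e q x ->
  forall j, (j<n)%nat -> x j = if S j then e / (b j * Wt n S b q) else 0.
Proof.
  intros HS Hb He Hq [Hnn [Hc Hopt]] j Hj.
  assert (HW := Wt_pos n S b q HS Hb Hq). set (W := Wt n S b q) in *.
  set (vs := e / W).
  assert (Hvs : 0 < vs) by (apply Rdiv_lt_0_compat; auto).
  set (y := fun k => if S k then vs / b k else 0).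
  assert (Hy : nonneg_bundle n y).
  { intros k Hk. unfold y. destruct (S k) eqn:E; [|lra]. apply Rlt_le, Rdiv_lt_0_compat; auto. }
  assert (Hcy : cost n q y = e).
  { unfold cost, y. transitivity (vs * W).
    unfold W, Wt. rewrite <- rsum_scal. apply rsum_ext. intros k Hk. destruct (S k) eqn:E; [|lra].
    field. apply Rgt_not_eq, Hb; auto.
    unfold vs; field; lra. }
  assert (Hly : leontief n S b y = vs).
  { unfold leontief. destruct (LA1 S b y n HS) as [v Hv]. rewrite Hv.
    destruct (LA3 _ _ _ _ _ Hv) as [k [Hk [Hsk ->]]]. unfold y; rewrite Hsk. field. apply Rgt_not_eq, Hb; auto. }
  assert (Hlx := Hopt y Hy ltac:(lra)). rewrite Hly in Hlx.
  unfold leontief in Hlx. destruct (LA1 S b x n HS) as [vx Hvx]. rewrite Hvx in Hlx.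
  assert (Hle : forall k, (k<n)%nat -> q k * y k <= q k * x k).
  { intros k Hk. unfold y. destruct (S k) eqn:E.
    - apply Rmult_le_compat_l. apply Rlt_le; auto.
      pose proof (LA2 _ _ _ _ _ Hvx k Hk E). pose proof (Hb k Hk E).
      apply Rmult_le_reg_l with (b k); auto. field_simplify; [|lra]. lra.
    - rewrite Rmult_0_r. apply Rmult_le_pos; [apply Rlt_le; auto| apply Hnn; auto]. }
  assert (Heq := rsum_le_eq n _ _ Hle ltac:(unfold cost in *; fold y in Hcy; lra) j Hj).
  assert (q j <> 0) by (apply Rgt_not_eq, Hq; auto).
  assert (x j = y j) by (apply Rmult_eq_reg_l with (q j); auto).
  rewrite H0. unfold y, vs. destruct (S j) eqn:E; auto. field. split; auto. apply Rgt_not_eq; auto. apply Rgt_not_eq, Hb; auto.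
Qed.

Definition upd (q : nat -> R) j v := fun h => if Nat.eqb h j then v else q h.
Definition wgt n (S:nat->bool) (b q : nat -> R) j := q j / (b j * Wt n S b q).
Definition xd n m (S : nat -> nat -> bool) (b : nat -> nat -> R) (e : nat -> R) q j :=
  rsum m (fun i => if S i j then e i / (b i j * Wt n (S i) (b i) q) else 0).
Definition phi n m (S : nat -> nat -> bool) (b : nat -> nat -> R) (e : nat -> R) q :=
  rsum n q - rsum m (fun i => e i * ln (Wt n (S i) (b i) q)).

Lemma Wt_ext n S b q q' : (forall k, (k<n)%nat -> q k = q' k) -> Wt n S b q = Wt n S b q'.
Proof. intros H; unfold Wt; apply rsum_ext; intros k Hk; rewrite H; auto. Qed.
Lemma xd_ext n m S b e q q' j : (forall k, (k<n)%nat -> q k = q' k) -> xd n m S b e q j = xd n m S b e q' j.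
Proof. intros H; unfold xd; apply rsum_ext; intros i Hi; rewrite (Wt_ext n (S i) (b i) q q'); auto. Qed.
Lemma phi_ext n m S b e q q' : (forall k, (k<n)%nat -> q k = q' k) -> phi n m S b e q = phi n m S b e q'.
Proof. intros H; unfold phi. rewrite (rsum_ext n q q') by auto. f_equal. apply rsum_ext; intros i Hi; rewrite (Wt_ext n (S i) (b i) q q'); auto. Qed.

Lemma Wt_upd n S b q j v : (j < n)%nat ->
  Wt n S b (upd q j v) = Wt n S b q + (if S j then (v - q j)/b j else 0).
Proof.
  intros Hj. unfold Wt.
  rewrite (rsum_ext n _ (fun k => if Nat.eqb k j then (if S j then v / b j else 0) else (if S k then q k / b k else 0))).
  rewrite rsum_upd by auto. destruct (S j); [unfold Rdiv; lra|lra].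
  intros k Hk. unfold upd. destruct (Nat.eqb_spec k j); subst; auto.
Qed.

Lemma wgt_le1 n S b q j : (j<n)%nat -> S j = true -> 0 < b j -> (forall k, (k<n)%nat -> S k = true -> 0 < b k) ->
  (forall k, (k<n)%nat -> 0 < q k) -> 0 < wgt n S b q j <= 1.
Proof.
  intros Hj HS Hbj Hb Hq. unfold wgt.
  assert (HW : 0 < Wt n S b q) by (apply Wt_pos; eauto).
  assert (q j / b j <= Wt n S b q).
  { unfold Wt. replace (q j / b j) with ((fun k => if S k then q k / b k else 0) j) by (simpl; rewrite HS; auto).
    apply (rsum_term_le n (fun k => if S k then q k / b k else 0) j); auto. intros i Hi. destruct (S i) eqn:E; [|lra]. apply Rlt_le, Rdiv_lt_0_compat; auto. }
  assert (Hqj := Hq j Hj).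
  split. apply Rdiv_lt_0_compat; auto. apply Rmult_lt_0_compat; auto.
  replace (q j / (b j * Wt n S b q)) with ((q j / b j) / Wt n S b q) by (field; lra).
  apply Rmult_le_reg_r with (Wt n S b q); auto. unfold Rdiv. rewrite Rmult_assoc, Rinv_l by lra. unfold Rdiv in H; lra.
Qed.

Lemma xd_ident n m S b e q j :
  q j * xd n m S b e q j = rsum m (fun i => if S i j then e i * wgt n (S i) (b i) q j else 0).
Proof.
  unfold xd. rewrite <- rsum_scal. apply rsum_ext. intros i Hi. destruct (S i j); [|lra].
  unfold wgt, Rdiv. ring.
Qed.

Lemma phi_update n m S b e q j a :
  (forall i, (i < m)%nat -> exists k, (k < n)%nat /\ S i k = true) ->
  (forall i k, (i < m)%nat -> (k < n)%nat -> S i k = true -> 0 < b i k) ->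
  (forall i, (i < m)%nat -> 0 < e i) ->
  (forall k, (k<n)%nat -> 0 < q k) -> (j < n)%nat -> -1/23 <= a <= 1/23 ->
  phi n m S b e (upd q j (q j * (1 + a))) - phi n m S b e q <=
   - a * q j * (xd n m S b e q j - 1) + 23/22 * (a*a) * q j * xd n m S b e q j.
Proof.
  intros HS Hb He Hq Hj Ha. unfold phi.
  rewrite (rsum_ext n (upd q j (q j * (1+a))) (fun h => if Nat.eqb h j then q j * (1+a) else q h)) by auto.
  rewrite rsum_upd by auto.
  assert (Hln : forall i, (i<m)%nat ->
     (if S i j then e i * (a * wgt n (S i) (b i) q j) - e i * (23/22 * (a*a)) * wgt n (S i) (b i) q j else 0)
     <= e i * ln (Wt n (S i) (b i) (upd q j (q j * (1 + a)))) - e i * ln (Wt n (S i) (b i) q)).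
  { intros i Hi. rewrite Wt_upd by auto.
    assert (HW : 0 < Wt n (S i) (b i) q) by (apply Wt_pos; auto; intros; apply Hb; auto).
    destruct (S i j) eqn:E.
    - pose proof (wgt_le1 n (S i) (b i) q j Hj E (Hb i j Hi Hj E) (fun k Hk => Hb i k Hi Hk) Hq) as [Hw0 Hw1].
      set (w := wgt n (S i) (b i) q j) in *.
      assert (Wt n (S i) (b i) q + (q j * (1 + a) - q j) / b i j = Wt n (S i) (b i) q * (1 + a * w)).
      { unfold w, wgt. field. split; [lra|]. apply Rgt_not_eq, Hb; auto. }
      rewrite H. rewrite ln_mult by nra.
      assert (-1/23 <= a * w) by nra.
      pose proof (ln_1p_lower (a*w) H0).
      assert (Hei := He i Hi).
      assert (0 <= (a*a)) by nra.
      assert ((a*w)*(a*w) <= (a*a) * w) by nra.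
      nra.
    - rewrite Rplus_0_r. lra. }
  pose proof (rsum_le m _ _ Hln) as Hs.
  rewrite rsum_minus in Hs.
  assert (rsum m (fun i => if S i j then e i * (a * wgt n (S i) (b i) q j) - e i * (23 / 22 * (a * a)) * wgt n (S i) (b i) q j else 0)
    = (a - 23/22*(a*a)) * (q j * xd n m S b e q j)).
  { rewrite xd_ident, <- rsum_scal. apply rsum_ext. intros i Hi. destruct (S i j); ring. }
  rewrite H in Hs. lra.
Qed.

Lemma phi_lower n m S b e :
  (forall i, (i < m)%nat -> exists k, (k < n)%nat /\ S i k = true) ->
  (forall i k, (i < m)%nat -> (k < n)%nat -> S i k = true -> 0 < b i k) ->
  (forall i, (i < m)%nat -> 0 < e i) ->
  exists K, forall q, (forall k, (k<n)%nat -> 0 < q k) -> K <= phi n m S b e q.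
Proof.
  intros HS Hb He.
  set (beta := rsum m (fun i => rsum n (fun k => if S i k then / b i k else 0)) + 1).
  set (Em := rsum m e + 1).
  assert (HE0 : 0 <= rsum m e) by (apply rsum_nonneg; intros; apply Rlt_le; auto).
  assert (Hbi : forall i, (i<m)%nat -> 0 <= rsum n (fun k => if S i k then / b i k else 0)).
  { intros i Hi. apply rsum_nonneg. intros k Hk. destruct (S i k) eqn:E; [|lra]. apply Rlt_le, Rinv_0_lt_compat, Hb; auto. }
  assert (Hbeta : 1 <= beta) by (unfold beta; assert (0 <= rsum m (fun i => rsum n (fun k => if S i k then / b i k else 0))) by (apply rsum_nonneg; auto); lra).
  set (c := 2 * Em * beta).
  assert (Hc : 0 < c) by (unfold c, Em; nra).
  exists (- (rsum m e * Rabs (ln c - 1))).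
  intros q Hq.
  set (sq := rsum n q).
  assert (Hsq : 0 <= sq) by (apply rsum_nonneg; intros; apply Rlt_le; auto).
  assert (Hterm : forall i, (i<m)%nat -> e i * ln (Wt n (S i) (b i) q) <= e i * sq / (2*Em) + e i * Rabs (ln c - 1)).
  { intros i Hi. assert (HW : 0 < Wt n (S i) (b i) q) by (apply Wt_pos; auto; intros; apply Hb; auto).
    assert (HWle : Wt n (S i) (b i) q <= sq * beta).
    { assert (Wt n (S i) (b i) q <= sq * rsum n (fun k => if S i k then / b i k else 0)).
      { unfold Wt. rewrite <- rsum_scal. apply rsum_le. intros k Hk. destruct (S i k) eqn:E; [|lra].
        assert (q k <= sq) by (apply (rsum_term_le n q k); auto; intros; apply Rlt_le; auto).
        assert (0 < / b i k) by (apply Rinv_0_lt_compat, Hb; auto). unfold Rdiv. nra. }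
      assert (rsum n (fun k => if S i k then / b i k else 0) <= beta - 1).
      { unfold beta. ring_simplify.
        apply (rsum_term_le m (fun i => rsum n (fun k => if S i k then / b i k else 0)) i); auto. }
      nra. }
    assert (ln (Wt n (S i) (b i) q) = ln (Wt n (S i) (b i) q / c) + ln c).
    { unfold Rdiv. rewrite ln_mult, ln_Rinv by (try apply Rinv_0_lt_compat; lra). ring. }
    pose proof (ln_le_sub1 (Wt n (S i) (b i) q / c) ltac:(apply Rdiv_lt_0_compat; lra)).
    assert (Wt n (S i) (b i) q / c <= sq / (2*Em)).
    { unfold c. unfold Rdiv. rewrite Rinv_mult. apply Rmult_le_reg_r with beta; [lra|].
      assert (0 < Em) by (unfold Em; lra).
      replace (Wt n (S i) (b i) q * (/ (2 * Em) * / beta) * beta) with (Wt n (S i) (b i) q * / (2*Em)) by (field; lra).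
      assert (0 < / (2*Em)) by (apply Rinv_0_lt_compat; lra). nra. }
    assert (Hei := He i Hi). pose proof (Rle_abs (ln c - 1)).
    rewrite H. unfold Rdiv in *. nra. }
  pose proof (rsum_le m _ _ Hterm). rewrite rsum_plus in H.
  rewrite rsum_scal_r in H.
  replace (rsum m (fun i => e i * sq / (2*Em))) with (rsum m e * (sq / (2*Em))) in H
    by (rewrite <- rsum_scal_r; apply rsum_ext; intros; unfold Rdiv; ring).
  assert (rsum m e * (sq / (2*Em)) <= sq / 2).
  { unfold Em. apply Rmult_le_reg_r with (2 * (rsum m e + 1)); [lra|].
    field_simplify; [|lra]. nra. }
  unfold phi. fold sq. nra.
Qed.

Definition indR (P : Prop) (x : R) : R := if excluded_middle_informative P then x else 0.

Lemma indR_T (P:Prop) x : P -> indR P x = x.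
Proof. intros H; unfold indR; destruct excluded_middle_informative; tauto. Qed.
Lemma indR_F (P:Prop) x : ~P -> indR P x = 0.
Proof. intros H; unfold indR; destruct excluded_middle_informative; tauto. Qed.
Lemma indR_nonneg (P:Prop) x : 0 <= x -> 0 <= indR P x.
Proof. unfold indR; destruct excluded_middle_informative; lra. Qed.
Lemma indR_le_x (P:Prop) x : 0 <= x -> indR P x <= x.
Proof. unfold indR; destruct excluded_middle_informative; lra. Qed.
Lemma indR_mono (P Q:Prop) x y : (P -> Q) -> 0 <= y -> (P -> x <= y) -> indR P x <= indR Q y.
Proof. intros H Hy Hxy. unfold indR; do 2 destruct excluded_middle_informative; try tauto; lra. Qed.
Lemma indR_scal (P:Prop) c x : c * indR P x = indR P (c * x).
Proof. unfold indR; destruct excluded_middle_informative; lra. Qed.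
Lemma indR_abs (P:Prop) x : Rabs (indR P x) = indR P (Rabs x).
Proof. unfold indR; destruct excluded_middle_informative; auto. apply Rabs_R0. Qed.

Definition tauf (u : nat -> R) k := match k with O => 0 | S k' => u k' end.

Lemma u_mono (u : nat -> R) : (forall k, u k < u (S k)) -> forall k1 k2, (k1 < k2)%nat -> u k1 < u k2.
Proof. intros H k1 k2 Hk. induction k2; [lia|]. destruct (Nat.eq_dec k1 k2). subst; auto. specialize (IHk2 ltac:(lia)). specialize (H k2). lra. Qed.
Lemma u_mono_le (u : nat -> R) : (forall k, u k < u (S k)) -> forall k1 k2, (k1 <= k2)%nat -> u k1 <= u k2.
Proof. intros H k1 k2 Hk. destruct (Nat.eq_dec k1 k2). subst; lra. apply Rlt_le, u_mono; auto; lia. Qed.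
Lemma u_lt_inv (u : nat -> R) : (forall k, u k < u (S k)) -> forall k1 k2, u k1 < u k2 -> (k1 < k2)%nat.
Proof. intros H k1 k2 Hu. destruct (Nat.lt_ge_cases k1 k2); auto. pose proof (u_mono_le u H k2 k1 H0); lra. Qed.
Lemma u_le_inv (u : nat -> R) : (forall k, u k < u (S k)) -> forall k1 k2, u k1 <= u k2 -> (k1 <= k2)%nat.
Proof. intros H k1 k2 Hu. destruct (Nat.le_gt_cases k1 k2); auto. pose proof (u_mono u H k2 k1 H0); lra. Qed.

Lemma N_exists (u : nat -> R) : (forall k, u k < u (S k)) -> (forall T, exists k, T < u k) ->
  forall t, exists N, forall k, u k < t <-> (k < N)%nat.
Proof.
  intros Hinc Hd t. destruct (Hd t) as [k0 Hk0].
  assert (exists N, (forall k, (k < N)%nat -> u k < t) /\ t <= u N).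
  { clear Hd. apply Rlt_le in Hk0. induction k0.
    - exists 0%nat. split; [intros; lia| lra].
    - destruct (Rlt_dec (u k0) t).
      + exists (S k0). split; [|lra]. intros k Hk. destruct (Nat.eq_dec k k0). subst; auto.
        pose proof (u_mono u Hinc k k0 ltac:(lia)). lra.
      + apply IHk0. lra. }
  destruct H as [N [H1 H2]]. exists N. intros k. split.
  - intros Hk. destruct (Nat.lt_ge_cases k N); auto. pose proof (u_mono_le u Hinc N k H). lra.
  - auto.
Qed.

Lemma Delta_pos (u : nat -> R) : 0 < u 0%nat -> (forall k, u k < u (S k)) -> forall k, 0 < u k - tauf u k.
Proof. intros H0 H k. destruct k; simpl; [lra|]. specialize (H k); lra. Qed.
Lemma Delta_le1 (u : nat -> R) : u 0%nat <= 1 -> (forall k, u (S k) - u k <= 1) -> forall k, u k - tauf u k <= 1.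
Proof. intros H0 H k. destruct k; simpl; [lra|]. auto. Qed.
Lemma u_pos (u : nat -> R) : 0 < u 0%nat -> (forall k, u k < u (S k)) -> forall k, 0 < u k.
Proof. intros H0 H k. pose proof (u_mono_le u H 0 k ltac:(lia)). lra. Qed.

Lemma window_sum (u : nat -> R) : 0 < u 0%nat -> u 0%nat <= 1 -> (forall k, u k < u (S k)) -> (forall k, u (S k) - u k <= 1) ->
  forall s1 s2 N, rsum N (fun k => indR (s1 <= u k < s2) (u k - tauf u k)) <= Rmax 0 (s2 - s1 + 1).
Proof.
  intros H0 H01 Hinc Hgap s1 s2 N.
  set (f := fun N => match N with O => 0 | S N' => Rmax 0 (Rmin (u N') s2 - s1 + 1) end).
  assert (Hf : forall N, rsum N (fun k => indR (s1 <= u k < s2) (u k - tauf u k)) <= f N).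
  { induction N0.
    - simpl; lra.
    - simpl rsum. destruct (excluded_middle_informative (s1 <= u N0 < s2)) as [Hw|Hw].
      + rewrite indR_T by auto. destruct N0 as [|N'].
        * simpl. unfold Rmin, Rmax. repeat destruct Rle_dec; lra.
        * simpl in IHN0 |- *. pose proof (Hinc N'). pose proof (Hgap N').
          unfold Rmin, Rmax in *. repeat destruct Rle_dec; lra.
      + rewrite indR_F by auto. rewrite Rplus_0_r. eapply Rle_trans; [apply IHN0|].
        destruct N0 as [|N']; simpl. unfold Rmax; destruct Rle_dec; lra.
        pose proof (Hinc N'). unfold Rmin, Rmax; repeat destruct Rle_dec; lra. }
  eapply Rle_trans; [apply Hf|]. destruct N; simpl. unfold Rmax; destruct Rle_dec; lra.
  unfold Rmin, Rmax; repeat destruct Rle_dec; lra.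
Qed.

Lemma atmost_one (u : nat -> R) : 0 < u 0%nat -> u 0%nat <= 1 -> (forall k, u k < u (S k)) -> (forall k, u (S k) - u k <= 1) ->
  forall s N, rsum N (fun k => indR (tauf u k < s < u k) (u k - tauf u k)) <= 1.
Proof.
  intros H0 H01 Hinc Hgap s N.
  assert (Hz : forall N, (forall k, (k < N)%nat -> u k <= s) -> rsum N (fun k => indR (tauf u k < s < u k) (u k - tauf u k)) = 0).
  { intros N' H. rewrite (rsum_ext N' _ (fun _ => 0)). apply rsum_zero. intros k Hk. apply indR_F. specialize (H k Hk); lra. }
  induction N. simpl; lra.
  simpl rsum. destruct (excluded_middle_informative (tauf u N < s < u N)) as [Hw|Hw].
  - rewrite indR_T by auto. rewrite Hz. pose proof (Delta_le1 u H01 Hgap N). lra.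
    intros k Hk. destruct N; [lia|]. simpl in Hw. pose proof (u_mono_le u Hinc k N ltac:(lia)). lra.
  - rewrite indR_F by auto. lra.
Qed.
Lemma indR_mono_same (P:Prop) x y : (P -> x <= y) -> indR P x <= indR P y.
Proof. intros H. unfold indR; destruct excluded_middle_informative; auto; lra. Qed.

Lemma tel_add (pi a : nat -> R) : (forall k, pi (S k) = pi k * (1 + a k)) ->
  forall N1 N2, (N1 <= N2)%nat -> pi N2 - pi N1 = rsum N2 (fun k => if Nat.leb N1 k then pi k * a k else 0).
Proof.
  intros H N1 N2 Hle. induction N2.
  - assert (N1 = 0%nat) by lia. subst. simpl. lra.
  - destruct (Nat.eq_dec N1 (S N2)).
    + subst. cbn [rsum]. rewrite (rsum_ext N2 _ (fun _ => 0)). rewrite rsum_zero.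
      destruct (Nat.leb_spec (S N2) N2); [lia|]. lra.
      intros k Hk. destruct (Nat.leb_spec (S N2) k); auto; lia.
    + cbn [rsum]. rewrite <- IHN2 by lia. destruct (Nat.leb_spec N1 N2); [|lia]. rewrite H. lra.
Qed.

Lemma tel_mul (pi a : nat -> R) : (forall k, pi (S k) = pi k * (1 + a k)) ->
  forall N1 d, 0 < pi N1 ->
  rsum (N1 + d) (fun k => if Nat.leb N1 k then Rabs (a k) else 0) <= 1/2 ->
  pi N1 * (1 - rsum (N1 + d) (fun k => if Nat.leb N1 k then Rabs (a k) else 0)) <= pi (N1 + d)%nat /\
  pi (N1 + d)%nat * (1 - rsum (N1 + d) (fun k => if Nat.leb N1 k then Rabs (a k) else 0)) <= pi N1.
Proof.
  intros H N1 d Hp. induction d; intros HA.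
  - rewrite Nat.add_0_r in *. rewrite (rsum_ext N1 _ (fun _ => 0)). rewrite rsum_zero. lra.
    intros k Hk. destruct (Nat.leb_spec N1 k); auto; lia.
  - rewrite Nat.add_succ_r in *. cbn [rsum] in *. destruct (Nat.leb_spec N1 (N1 + d)); [|lia].
    set (A := rsum (N1 + d) (fun k => if Nat.leb N1 k then Rabs (a k) else 0)) in *.
    assert (0 <= A) by (apply rsum_nonneg; intros; destruct Nat.leb; [apply Rabs_pos|lra]).
    pose proof (Rabs_pos (a (N1+d)%nat)).
    destruct (IHd ltac:(lra)) as [I1 I2].
    rewrite H. set (x := a (N1 + d)%nat) in *. set (P := pi (N1+d)%nat) in *.
    assert (-Rabs x <= x) by (pose proof (Rabs_pos x); unfold Rabs in *; destruct Rcase_abs; lra).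
    assert (x <= Rabs x) by apply RRle_abs.
    assert (0 < P) by nra.
    set (t := Rabs x) in *. set (pN := pi N1) in *.
    split.
    + assert (P * (1 - t) <= P * (1 + x)) by (apply Rmult_le_compat_l; lra).
      assert (pN * (1 - A) * (1 - t) <= P * (1 - t)) by (apply Rmult_le_compat_r; lra).
      assert (0 <= pN * A * t) by (apply Rmult_le_pos; [apply Rmult_le_pos|]; lra).
      nra.
    + assert ((1 + x) * (1 - (A + t)) <= 1 - A) by nra.
      assert (P * ((1 + x) * (1 - (A + t))) <= P * (1 - A)) by (apply Rmult_le_compat_l; lra).
      nra.
Qed.

Fixpoint nsum (k : nat) (f : nat -> nat) : nat :=
  match k with O => O | S k' => (nsum k' f + f k')%nat end.

Lemma nsum_le k f g : (forall i, (i<k)%nat -> (f i <= g i)%nat) -> (nsum k f <= nsum k g)%nat.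
Proof. induction k; simpl; intros H; [lia|]. specialize (IHk ltac:(intros; apply H; lia)). specialize (H k ltac:(lia)). lia. Qed.
Lemma nsum_lt k f g j : (forall i, (i<k)%nat -> (f i <= g i)%nat) -> (j < k)%nat -> (f j < g j)%nat -> (nsum k f < nsum k g)%nat.
Proof. induction k; simpl; intros H Hj Hlt; [lia|]. destruct (Nat.eq_dec j k). subst.
  pose proof (nsum_le k f g ltac:(intros; apply H; lia)). lia.
  specialize (IHk ltac:(intros; apply H; lia) ltac:(lia) Hlt). specialize (H k ltac:(lia)). lia. Qed.
Lemma nsum_zero k f : nsum k f = 0%nat -> forall i, (i<k)%nat -> f i = 0%nat.
Proof. induction k; simpl; intros H i Hi; [lia|]. destruct (Nat.eq_dec i k); subst; [lia|]. apply IHk; lia. Qed.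
Lemma fin_max n (P : nat -> bool) (f : nat -> R) : (exists g, (g<n)%nat /\ P g = true) ->
  exists g0, (g0<n)%nat /\ P g0 = true /\ forall g, (g<n)%nat -> P g = true -> f g <= f g0.
Proof.
  induction n; intros [g [Hg HP]]; [lia|].
  destruct (classic (exists g, (g<n)%nat /\ P g = true)) as [Hex|Hno].
  - destruct (IHn Hex) as [g0 [Hg0 [HP0 Hm]]].
    destruct (P n) eqn:En.
    + destruct (Rle_dec (f g0) (f n)).
      * exists n. repeat split; auto. intros g' Hg' HP'. destruct (Nat.eq_dec g' n). subst; lra.
        specialize (Hm g' ltac:(lia) HP'); lra.
      * exists g0. repeat split; auto. intros g' Hg' HP'. destruct (Nat.eq_dec g' n). subst; lra.
        apply Hm; auto; lia.
    + exists g0. repeat split; auto. intros g' Hg' HP'. destruct (Nat.eq_dec g' n). subst; congruence.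
      apply Hm; auto; lia.
  - assert (g = n). { destruct (Nat.eq_dec g n); auto. exfalso; apply Hno; exists g; split; auto; lia. }
    subst. exists n. repeat split; auto. intros g' Hg' HP'. destruct (Nat.eq_dec g' n). subst; lra.
    exfalso; apply Hno; exists g'; split; auto; lia.
Qed.
Lemma nsum_ext k f g : (forall i, (i<k)%nat -> f i = g i) -> nsum k f = nsum k g.
Proof. induction k; simpl; intros H; auto. rewrite IHk, H; auto. Qed.
Lemma nsum_upd k f g j : (j<k)%nat -> (forall i, (i<k)%nat -> i <> j -> f i = g i) -> f j = S (g j) -> nsum k f = S (nsum k g).
Proof.
  induction k; intros Hj H Hfj; [lia|]. simpl. destruct (Nat.eq_dec j k).
  - subst. rewrite (nsum_ext k f g) by (intros; apply H; lia). lia.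
  - rewrite IHk; auto; try lia. rewrite H by lia. lia.
Qed.
Lemma PS_comm A (X : nat -> nat) C (K : nat -> nat -> nat -> R) :
  rsum A (fun a => rsum (X a) (fun x => rsum C (fun c => K a x c))) =
  rsum C (fun c => rsum A (fun a => rsum (X a) (fun x => K a x c))).
Proof.
  rewrite (rsum_ext A _ (fun a => rsum C (fun c => rsum (X a) (fun x => K a x c)))).
  apply rsum_comm. intros a Ha. apply rsum_comm.
Qed.

Lemma rsum5_comm A (X : nat -> nat) M C (Y : nat -> nat) (F : nat -> nat -> nat -> nat -> nat -> R) :
  rsum A (fun a => rsum (X a) (fun x => rsum M (fun i => rsum C (fun c => rsum (Y c) (fun y => F a x i c y))))) =
  rsum C (fun c => rsum (Y c) (fun y => rsum M (fun i => rsum A (fun a => rsum (X a) (fun x => F a x i c y))))).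
Proof.
  rewrite PS_comm.
  rewrite (rsum_ext M _ (fun i => rsum C (fun c => rsum A (fun a => rsum (X a) (fun x => rsum (Y c) (fun y => F a x i c y)))))).
  2:{ intros i Hi. apply (PS_comm A X C (fun a x c => rsum (Y c) (fun y => F a x i c y))). }
  rewrite (rsum_ext M _ (fun i => rsum C (fun c => rsum (Y c) (fun y => rsum A (fun a => rsum (X a) (fun x => F a x i c y)))))).
  2:{ intros i Hi. apply rsum_ext. intros c Hc. apply (PS_comm A X (Y c) (fun a x y => F a x i c y)). }
  rewrite rsum_comm. apply rsum_ext. intros c Hc. apply rsum_comm.
Qed.

Theorem mainTheorem7
  (* n goods (supply 1 each), m buyers *)
  (n m : nat)
  (* buyer i: Leontief utility on goods S i with coefficients b i j, budget e i *)
  (S : nat -> nat -> bool) (b : nat -> nat -> R) (e : nat -> R)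
  (HS : forall i, (i < m)%nat -> exists j, (j < n)%nat /\ S i j = true)
  (Hb : forall i j, (i < m)%nat -> (j < n)%nat -> S i j = true -> 0 < b i j)
  (He : forall i, (i < m)%nat -> 0 < e i)
  (* demand: X i p is a utility-maximizing bundle of buyer i at prices p *)
  (X : nat -> (nat -> R) -> nat -> R)
  (HX : forall p, (forall j, (j < n)%nat -> 0 < p j) ->
        forall i, (i < m)%nat -> leontief_demand n (S i) (b i) (e i) p (X i p))
  (* step size *)
  (lambda : R) (Hlam0 : 0 < lambda) (Hlam1 : lambda <= 100 / 2346)
  (* strictly positive initial prices *)
  (p0 : nat -> R) (Hp0 : forall j, (j < n)%nat -> 0 < p0 j)
  (* update times of good j: u j 0 < u j 1 < ..., discrete, gaps <= 1 *)
  (u : nat -> nat -> R)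
  (Hu0 : forall j, (j < n)%nat -> 0 < u j 0%nat /\ u j 0%nat <= 1)
  (Hu_incr : forall j k, (j < n)%nat -> u j k < u j (Datatypes.S k))
  (Hu_gap : forall j k, (j < n)%nat -> u j (Datatypes.S k) - u j k <= 1)
  (Hu_discrete : forall j T, (j < n)%nat -> exists k, T < u j k)
  (Hu_nosim : forall j j' k k', (j < n)%nat -> (j' < n)%nat ->
                u j k = u j' k' -> j = j')
  (* tau j k = previous update time before the k-th update of good j *)
  (tau : nat -> nat -> R)
  (Htau : forall j k, tau j k = match k with O => 0 | Datatypes.S k' => u j k' end)
  (* price path: p j t = price of good j just before any update at time t;
     P j k = value of p_j just after its k-th update *)
  (p : nat -> R -> R) (P : nat -> nat -> R)
  (Hp_init : forall j t, (j < n)%nat -> 0 <= t -> t <= u j 0%nat -> p j t = p0 j)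
  (Hp_step : forall j k t, (j < n)%nat -> u j k < t -> t <= u j (Datatypes.S k) ->
               p j t = P j k)
  (* the values z~ used at each update *)
  (Zt : nat -> nat -> R)
  (HZt : forall j k, (j < n)%nat ->
     exists t1 t2,
       tau j k < t1 /\ t1 <= u j k /\ tau j k < t2 /\ t2 <= u j k /\
       excess m X (fun g => p g t1) j <= Zt j k /\
       Zt j k <= excess m X (fun g => p g t2) j)
  (* the tatonnement update rule *)
  (HP : forall j k, (j < n)%nat ->
     P j k = p j (u j k) * (1 + lambda * Rmin (Zt j k) 1 * (u j k - tau j k))) :
  forall eps, 0 < eps ->
  exists T, 0 <= T /\
    forall j t dt, (j < n)%nat -> T <= t -> 0 <= dt -> dt <= 1 ->
      Rabs (p j t - p j (t + dt)) <= eps.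
Proof.
  intros eps Heps. rename S into SS.
  assert (Hlam : lambda <= 1/23) by lra. clear Hlam1.
  assert (HNex : forall g t, exists N, (g < n)%nat -> forall k, u g k < t <-> (k < N)%nat).
  { intros g t. destruct (Nat.lt_ge_cases g n) as [Hg|Hg].
    - destruct (N_exists (u g) (fun k => Hu_incr g k Hg) (fun T => Hu_discrete g T Hg) t) as [N HN].
      exists N; auto.
    - exists 0%nat; intros; lia. }
  set (N := fun g t => proj1_sig (constructive_indefinite_description _ (HNex g t))).
  assert (HN : forall g t k, (g < n)%nat -> (u g k < t <-> (k < N g t)%nat)).
  { intros g t k Hg. unfold N. destruct constructive_indefinite_description; simpl; auto. }
  clearbody N. clear HNex.
  assert (Hinc : forall g, (g<n)%nat -> forall k, u g k < u g (S k)) by auto.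
  assert (HNu : forall g k, (g<n)%nat -> N g (u g k) = k).
  { intros g k Hg. apply Nat.le_antisymm.
    - destruct (Nat.le_gt_cases (N g (u g k)) k); auto. exfalso.
      assert (u g k < u g k) by (apply HN; auto). lra.
    - destruct (Nat.le_gt_cases k (N g (u g k))); auto.
      destruct k. lia. assert (u g k < u g (S k)) by auto.
      assert (k < N g (u g (S k)))%nat by (apply HN; auto). lia. }
  assert (HNmono : forall g t1 t2, (g<n)%nat -> t1 <= t2 -> (N g t1 <= N g t2)%nat).
  { intros g t1 t2 Hg Ht. destruct (Nat.le_gt_cases (N g t1) (N g t2)); auto.
    assert (u g (N g t2) < t1) by (apply HN; auto).
    assert (~ (u g (N g t2) < t2)) by (rewrite HN; auto; lia). lra. }
  set (pi := fun g k => match k with O => p0 g | S k' => P g k' end).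
  assert (Hstate : forall g t, (g<n)%nat -> 0 <= t -> p g t = pi g (N g t)).
  { intros g t Hg Ht. destruct (N g t) as [|k] eqn:E; simpl.
    - apply Hp_init; auto. destruct (Rle_dec t (u g 0%nat)); auto.
      assert (0 < N g t)%nat by (apply HN; auto; lra). lia.
    - apply Hp_step; auto. apply HN; auto; lia.
      destruct (Rle_dec t (u g (S k))); auto.
      assert (S k < N g t)%nat by (apply HN; auto; lra). lia. }
  assert (Hupos : forall g k, (g<n)%nat -> 0 < u g k).
  { intros g k Hg. apply u_pos; auto. apply Hu0; auto. }
  assert (Hpiu : forall g k, (g<n)%nat -> p g (u g k) = pi g k).
  { intros. rewrite Hstate, HNu; auto. apply Rlt_le, Hupos; auto. }
  assert (Htauf : forall g k, tau g k = tauf (u g) k) by (intros g k; rewrite Htau; destruct k; auto).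
  set (Dl := fun g k => u g k - tau g k).
  assert (HDl : forall g k, (g<n)%nat -> 0 < Dl g k <= 1).
  { intros g k Hg. unfold Dl. rewrite Htauf. split.
    apply Delta_pos; [apply Hu0|]; auto. apply Delta_le1; [apply Hu0|]; auto. }
  set (mm := fun g k => Rmin (Zt g k) 1).
  set (a := fun g k => lambda * mm g k * Dl g k).
  assert (Hpistep : forall g k, (g<n)%nat -> pi g (S k) = pi g k * (1 + a g k)).
  { intros g k Hg. simpl. rewrite HP by auto. rewrite Hpiu by auto. unfold a, mm, Dl. ring. }
  set (st := fun t h => pi h (N h t)).
  assert (Hexc : forall t j, 0 <= t -> (j<n)%nat -> (forall h, (h<n)%nat -> 0 < st t h) ->
     excess m X (fun g => p g t) j = xd n m SS b e (st t) j - 1).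
  { intros t j Ht Hj Hpos. unfold excess. f_equal.
    assert (Hq : forall h, (h<n)%nat -> 0 < (fun g => p g t) h) by (intros h Hh; simpl; rewrite Hstate; auto; apply Hpos; auto).
    rewrite (xd_ext n m SS b e (st t) (fun g => p g t)).
    - unfold xd. apply rsum_ext. intros i Hi.
      apply (demand_formula n (SS i) (b i) (e i) (fun g => p g t) (X i (fun g => p g t))); auto.
    - intros k Hk. unfold st. rewrite Hstate; auto. }
  assert (HWpos : forall q i, (i<m)%nat -> (forall h, (h<n)%nat -> 0 < q h) -> 0 < Wt n (SS i) (b i) q).
  { intros q i Hi Hq. apply Wt_pos; auto. }
  assert (Hxd0 : forall q j, (j<n)%nat -> (forall h, (h<n)%nat -> 0 < q h) -> 0 <= xd n m SS b e q j).
  { intros q j Hj Hq. unfold xd. apply rsum_nonneg. intros i Hi. destruct (SS i j) eqn:E; [|lra].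
    apply Rlt_le, Rdiv_lt_0_compat; auto. apply Rmult_lt_0_compat; auto. }
  set (Cn := fun t => nsum n (fun g => N g t)).
  assert (HCstrict : forall h k t, (h<n)%nat -> u h k < t -> (Cn (u h k) < Cn t)%nat).
  { intros h k t Hh Ht. unfold Cn. apply (nsum_lt n _ _ h); auto.
    intros; apply HNmono; auto; lra. rewrite HNu by auto. apply HN; auto. }
  assert (HCmono : forall t1 t2, t1 <= t2 -> (Cn t1 <= Cn t2)%nat).
  { intros t1 t2 Ht. unfold Cn. apply nsum_le. intros; apply HNmono; auto. }
  assert (Hposall : forall K t, 0 <= t -> (Cn t < K)%nat -> forall h, (h<n)%nat -> 0 < st t h).
  { induction K; intros t Ht HC h Hh; [lia|].
    unfold st. destruct (N h t) as [|k] eqn:E.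
    - simpl; auto.
    - assert (Hk : u h k < t) by (apply HN; auto; lia).
      rewrite Hpistep by auto.
      assert (Hpk : 0 < pi h k).
      { pose proof (IHK (u h k) ltac:(apply Rlt_le, Hupos; auto) ltac:(pose proof (HCstrict h k t Hh Hk); lia) h Hh).
        unfold st in H; rewrite HNu in H; auto. }
      destruct (HZt h k Hh) as [t1 [t2 [H1 [H2 [H3 [H4 [H5 H6]]]]]]].
      assert (0 <= tau h k) by (rewrite Htauf; destruct k; simpl; [lra|apply Rlt_le, Hupos; auto]).
      assert (Hp1 : forall h', (h'<n)%nat -> 0 < st t1 h').
      { apply IHK. lra. pose proof (HCmono t1 (u h k) H2). pose proof (HCstrict h k t Hh Hk). lia. }
      rewrite Hexc in H5 by (auto; lra).
      pose proof (Hxd0 (st t1) h Hh Hp1).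
      assert (-1 <= mm h k) by (unfold mm, Rmin; destruct Rle_dec; lra).
      assert (mm h k <= 1) by (unfold mm; apply Rmin_r).
      pose proof (HDl h k Hh).
      assert (-1/23 <= a h k).
      { unfold a. assert (- Dl h k <= mm h k * Dl h k) by nra. nra. }
      apply Rmult_lt_0_compat; lra. }
  assert (Hpos : forall t, 0 <= t -> forall h, (h<n)%nat -> 0 < st t h).
  { intros t Ht. apply (Hposall (S (Cn t))); auto. }
  assert (Hpipos : forall g k, (g<n)%nat -> 0 < pi g k).
  { intros g k Hg. pose proof (Hpos (u g k) ltac:(apply Rlt_le, Hupos; auto) g Hg). unfold st in H; rewrite HNu in H; auto. }
  assert (Htau0 : forall g k, (g<n)%nat -> 0 <= tau g k).
  { intros g k Hg. rewrite Htauf; destruct k; simpl; [lra|apply Rlt_le, Hupos; auto]. }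
  assert (Htault : forall g k, (g<n)%nat -> tau g k < u g k).
  { intros g k Hg. pose proof (HDl g k Hg). unfold Dl in H; lra. }
  assert (HNwin : forall g k t, (g<n)%nat -> tau g k < t -> t <= u g k -> N g t = k).
  { intros g k t Hg H1 H2. apply Nat.le_antisymm.
    - destruct (Nat.le_gt_cases (N g t) k); auto. assert (u g k < t) by (apply HN; auto). lra.
    - destruct (Nat.le_gt_cases k (N g t)); auto. exfalso. destruct k. lia.
      rewrite Htauf in H1; simpl in H1. assert (~ (u g (N g t) < t)) by (rewrite HN; auto; lia).
      pose proof (u_mono_le (u g) (Hinc g Hg) (N g t) k ltac:(lia)). lra. }
  assert (Hmm : forall g k, (g<n)%nat -> -1 <= mm g k <= 1).
  { intros g k Hg. destruct (HZt g k Hg) as [t1 [t2 [H1 [H2 [H3 [H4 [H5 H6]]]]]]].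
    pose proof (Htau0 g k Hg).
    rewrite Hexc in H5 by (auto; try lra; apply Hpos; lra).
    pose proof (Hxd0 (st t1) g Hg ltac:(apply Hpos; lra)).
    split. unfold mm, Rmin; destruct Rle_dec; lra. unfold mm; apply Rmin_r. }
  set (Esum := rsum m e).
  assert (HE0 : 0 <= Esum) by (apply rsum_nonneg; intros; apply Rlt_le; auto).
  assert (Hxdub : forall q g, (g<n)%nat -> (forall h, (h<n)%nat -> 0 < q h) -> q g * xd n m SS b e q g <= Esum).
  { intros q g Hg Hq. rewrite xd_ident. apply rsum_le. intros i Hi. destruct (SS i g) eqn:E.
    - pose proof (wgt_le1 n (SS i) (b i) q g Hg E (Hb i g Hi Hg E) (fun k Hk => Hb i k Hi Hk) Hq). pose proof (He i Hi). nra.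
    - apply Rlt_le; auto. }
  set (Bp := (rsum n p0 + Esum) * (1 + lambda)).
  assert (HBp : forall g k, (g<n)%nat -> pi g k <= Bp).
  { intros g k Hg. assert (Hp0s : p0 g <= rsum n p0) by (apply (rsum_term_le n p0 g); auto; intros; apply Rlt_le; auto).
    assert (0 <= rsum n p0) by (apply rsum_nonneg; intros; apply Rlt_le; auto).
    induction k.
    - simpl. unfold Bp. nra.
    - rewrite Hpistep by auto.
      destruct (HZt g k Hg) as [t1 [t2 [H1 [H2 [H3 [H4 [H5 H6]]]]]]].
      pose proof (Htau0 g k Hg).
      rewrite Hexc in H6 by (auto; try lra; apply Hpos; lra).
      pose proof (Hxdub (st t2) g Hg ltac:(apply Hpos; lra)) as H7.
      assert (Hs2 : st t2 g = pi g k) by (unfold st; rewrite (HNwin g k t2); auto).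
      rewrite Hs2 in H7. rename H7 into Hxu.
      pose proof (Hpipos g k Hg). pose proof (HDl g k Hg). pose proof (Hmm g k Hg).
      unfold a. destruct (Rle_dec Esum (pi g k)).
      + assert (mm g k <= 0).
        { assert (Zt g k <= 0).
          { assert (pi g k * (Zt g k + 1) <= pi g k * 1) by (apply Rmult_le_compat_l; nra).
            nra. }
          unfold mm. eapply Rle_trans; [apply Rmin_l|]; auto. }
        assert (mm g k * Dl g k <= 0) by nra.
        assert (lambda * mm g k * Dl g k <= 0) by (rewrite Rmult_assoc; nra).
        assert (pi g k * (lambda * mm g k * Dl g k) <= 0) by nra. nra.
      + assert (mm g k * Dl g k <= 1) by nra.
        assert (lambda * mm g k * Dl g k <= lambda) by (rewrite Rmult_assoc; nra).
        assert (pi g k * (1 + lambda * mm g k * Dl g k) <= pi g k * (1 + lambda)) by (apply Rmult_le_compat_l; lra).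
        assert (pi g k * (1 + lambda) <= Esum * (1+lambda)) by (apply Rmult_le_compat_r; lra).
        unfold Bp. nra. }
  assert (Habsa : forall g k, (g<n)%nat -> Rabs (a g k) <= lambda * Dl g k).
  { intros g k Hg. unfold a. pose proof (Hmm g k Hg). pose proof (HDl g k Hg).
    rewrite Rabs_mult, Rabs_mult, (Rabs_right lambda), (Rabs_right (Dl g k)) by lra.
    assert (Rabs (mm g k) <= 1) by (apply Rabs_le; lra). rewrite Rmult_assoc; apply Rmult_le_compat_l; [lra|]. pose proof (Rabs_pos (mm g k)). nra. }
  assert (Hwin : forall g s1 s2 K, (g<n)%nat ->
     rsum K (fun k => indR (s1 <= u g k < s2) (Dl g k)) <= Rmax 0 (s2 - s1 + 1)).
  { intros g s1 s2 K Hg. rewrite (rsum_ext K _ (fun k => indR (s1 <= u g k < s2) (u g k - tauf (u g) k))).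
    apply window_sum; try apply Hu0; auto. intros k Hk; unfold Dl; rewrite Htauf; auto. }
  assert (Hone : forall g s K, (g<n)%nat ->
     rsum K (fun k => indR (tau g k < s < u g k) (Dl g k)) <= 1).
  { intros g s K Hg. rewrite (rsum_ext K _ (fun k => indR (tauf (u g) k < s < u g k) (u g k - tauf (u g) k))).
    apply atmost_one; try apply Hu0; auto. intros k Hk; unfold Dl; rewrite Htauf; auto. }
  assert (Hratio : forall g s1 s2, (g<n)%nat -> 0 <= s1 <= s2 -> s2 <= s1 + 1 ->
     21/23 * st s1 g <= st s2 g /\ st s2 g * (21/23) <= st s1 g).
  { intros g s1 s2 Hg Hs1 Hs2. unfold st.
    set (N1 := N g s1). set (N2 := N g s2).
    assert (HN12 : (N1 <= N2)%nat) by (apply HNmono; auto; lra).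
    replace N2 with (N1 + (N2 - N1))%nat by lia.
    set (A := rsum (N1 + (N2 - N1)) (fun k => if Nat.leb N1 k then Rabs (a g k) else 0)).
    assert (HA : A <= 2/23).
    { unfold A. replace (N1 + (N2 - N1))%nat with N2 by lia.
      eapply Rle_trans. apply (rsum_le N2 _ (fun k => lambda * indR (s1 <= u g k < s2) (Dl g k))).
      - intros k Hk. destruct (Nat.leb_spec N1 k).
        + rewrite indR_T. apply Habsa; auto. split.
          destruct (Rlt_dec (u g k) s1); [|lra]. assert (k < N1)%nat by (apply HN; auto). lia.
          apply HN; auto.
        + apply Rmult_le_pos; [lra|]. apply indR_nonneg. apply Rlt_le, HDl; auto.
      - rewrite rsum_scal. pose proof (Hwin g s1 s2 N2 Hg).
        assert (Rmax 0 (s2 - s1 + 1) <= 2) by (unfold Rmax; destruct Rle_dec; lra).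
        assert (0 <= rsum N2 (fun k => indR (s1 <= u g k < s2) (Dl g k))).
        { apply rsum_nonneg; intros; apply indR_nonneg; apply Rlt_le, HDl; auto. }
        nra. }
    assert (0 <= A) by (apply rsum_nonneg; intros; destruct Nat.leb; [apply Rabs_pos|lra]).
    destruct (tel_mul (pi g) (a g) (fun k => Hpistep g k Hg) N1 (N2 - N1) (Hpipos g N1 Hg) ltac:(fold A; lra)) as [T1 T2].
    fold A in T1, T2. pose proof (Hpipos g N1 Hg). pose proof (Hpipos g (N1 + (N2 - N1))%nat Hg).
    split; nra. }
  assert (HWratio : forall i s1 s2, (i<m)%nat -> 0 <= s1 <= s2 -> s2 <= s1 + 1 ->
     21/23 * Wt n (SS i) (b i) (st s1) <= Wt n (SS i) (b i) (st s2) /\ Wt n (SS i) (b i) (st s2) * (21/23) <= Wt n (SS i) (b i) (st s1)).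
  { intros i s1 s2 Hi Hs1 Hs2. unfold Wt. split.
    - rewrite <- (rsum_scal n (21/23) (fun k => if SS i k then st s1 k / b i k else 0)). apply rsum_le. intros k Hk. destruct (SS i k) eqn:E; [|lra].
      pose proof (Hratio k s1 s2 Hk Hs1 Hs2). pose proof (Hb i k Hi Hk E).
      unfold Rdiv. assert (0 < / b i k) by (apply Rinv_0_lt_compat; auto). nra.
    - rewrite <- (rsum_scal_r n (21/23) (fun k => if SS i k then st s2 k / b i k else 0)). apply rsum_le. intros k Hk. destruct (SS i k) eqn:E; [|lra].
      pose proof (Hratio k s1 s2 Hk Hs1 Hs2). pose proof (Hb i k Hi Hk E).
      unfold Rdiv. assert (0 < / b i k) by (apply Rinv_0_lt_compat; auto). nra. }
  set (Dphi := fun g k => phi n m SS b e (upd (st (u g k)) g (pi g (S k))) - phi n m SS b e (st (u g k))).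
  assert (Htel : forall K T, 0 < T -> Cn T = K ->
     phi n m SS b e (st T) - phi n m SS b e p0 = rsum n (fun g => rsum (N g T) (Dphi g))).
  { induction K; intros T HT HC.
    - assert (Hz : forall g, (g<n)%nat -> N g T = 0%nat) by (intros; apply (nsum_zero n (fun g => N g T)); auto).
      rewrite (phi_ext n m SS b e (st T) p0). rewrite (rsum_ext n _ (fun _ => 0)). rewrite rsum_zero; lra.
      intros g Hg. rewrite Hz; auto. intros h Hh. unfold st. rewrite Hz; auto.
    - destruct (fin_max n (fun g => Nat.ltb 0 (N g T)) (fun g => u g (N g T - 1)%nat)) as [g0 [Hg0 [HP0 Hmax]]].
      { destruct (classic (exists g, (g<n)%nat /\ Nat.ltb 0 (N g T) = true)) as [?|Hno]; auto.
        exfalso. assert (Cn T = 0%nat). { unfold Cn. transitivity (nsum n (fun _ => 0%nat)).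
          apply nsum_ext. intros i Hi. destruct (N i T) eqn:E; auto. exfalso; apply Hno; exists i; split; auto.
          rewrite E; auto. clear. induction n; simpl; lia. }
        lia. }
      apply Nat.ltb_lt in HP0.
      set (k0 := (N g0 T - 1)%nat) in *. set (v := u g0 k0) in *.
      assert (Hk0 : N g0 T = S k0) by (unfold k0; lia).
      assert (HvT : v < T) by (apply HN; auto; lia).
      assert (Hv0 : 0 < v) by (apply Hupos; auto).
      assert (Hoth : forall g, (g<n)%nat -> g <> g0 -> N g v = N g T).
      { intros g Hg Hne. apply Nat.le_antisymm. apply HNmono; auto; lra.
        destruct (Nat.le_gt_cases (N g T) (N g v)) as [?|Hlt]; auto. exfalso.
        assert (Hm := Hmax g Hg ltac:(apply Nat.ltb_lt; lia)). simpl in Hm. fold k0 v in Hm.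
        assert (~ (u g (N g T - 1)%nat < v)) by (rewrite HN; auto; lia).
        apply Hne. apply (Hu_nosim g g0 (N g T - 1)%nat k0); auto. fold v. lra. }
      assert (Hg0v : N g0 v = k0) by (apply HNu; auto).
      assert (HCv : Cn v = K).
      { assert (Cn T = S (Cn v)); [|lia]. unfold Cn. apply (nsum_upd n _ _ g0); auto.
        intros i Hi Hne; rewrite Hoth; auto. lia. }
      assert (phi n m SS b e (st T) = phi n m SS b e (upd (st v) g0 (pi g0 (S k0)))).
      { apply phi_ext. intros h Hh. unfold upd, st. destruct (Nat.eqb_spec h g0). subst; rewrite Hk0; auto.
        rewrite Hoth; auto. }
      rewrite H.
      rewrite (rsum_ext n (fun g => rsum (N g T) (Dphi g)) (fun g => if Nat.eqb g g0 then rsum (S k0) (Dphi g0) else rsum (N g v) (Dphi g))).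
      rewrite rsum_upd by auto. rewrite Hg0v. simpl rsum.
      pose proof (IHK v Hv0 HCv). assert (Dphi g0 k0 = phi n m SS b e (upd (st v) g0 (pi g0 (S k0))) - phi n m SS b e (st v)) by reflexivity. lra.
      intros g Hg. destruct (Nat.eqb_spec g g0). subst; rewrite Hk0; auto. rewrite Hoth; auto. }
  assert (Hdq : forall h t' s T, (h<n)%nat -> 0 <= t' <= s -> s <= T ->
     Rabs (st s h - st t' h) <= rsum (N h T) (fun k' => indR (t' <= u h k' < s) (pi h k' * Rabs (a h k')))).
  { intros h t' s T Hh Ht Hs. unfold st.
    assert (H12 : (N h t' <= N h s)%nat) by (apply HNmono; auto; lra).
    assert (H2T : (N h s <= N h T)%nat) by (apply HNmono; auto; lra).
    rewrite (tel_add (pi h) (a h) (fun k => Hpistep h k Hh) _ _ H12).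
    rewrite (rsum_range _ _ _ H2T).
    eapply Rle_trans; [apply rsum_abs|]. apply rsum_le. intros k' Hk'.
    destruct (Nat.ltb_spec k' (N h s)); destruct (Nat.leb_spec (N h t') k').
    - rewrite indR_T. rewrite Rabs_mult, (Rabs_right (pi h k')). lra. apply Rle_ge, Rlt_le, Hpipos; auto.
      split. destruct (Rle_dec t' (u h k')); auto. assert (k' < N h t')%nat by (apply HN; auto; lra). lia.
      apply HN; auto.
    - rewrite Rabs_R0. apply indR_nonneg. apply Rmult_le_pos; [apply Rlt_le, Hpipos; auto|apply Rabs_pos].
    - rewrite Rabs_R0. apply indR_nonneg. apply Rmult_le_pos; [apply Rlt_le, Hpipos; auto|apply Rabs_pos].
    - rewrite Rabs_R0. apply indR_nonneg. apply Rmult_le_pos; [apply Rlt_le, Hpipos; auto|apply Rabs_pos]. }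
  set (Inner := fun T i j k (f : nat -> nat -> R) => rsum n (fun h => if SS i h then rsum (N h T) (fun k' => indR (tau j k < u h k' < u j k)
          (pi h k' / (b i h * Wt n (SS i) (b i) (st (u j k))) * f h k' * Dl h k')) else 0)).
  set (ErrF := fun T (f : nat -> nat -> R) j k =>
    rsum m (fun i => if SS i j then e i * wgt n (SS i) (b i) (st (u j k)) j * Inner T i j k f else 0)).
  assert (HWdiff : forall i t' s T, (i<m)%nat -> 0 <= t' <= s -> s <= T ->
     Rabs (Wt n (SS i) (b i) (st s) - Wt n (SS i) (b i) (st t')) <=
     rsum n (fun h => if SS i h then / b i h * rsum (N h T) (fun k' => indR (t' <= u h k' < s) (pi h k' * Rabs (a h k'))) else 0)).
  { intros i t' s T Hi Ht Hs. unfold Wt. rewrite <- rsum_minus. eapply Rle_trans; [apply rsum_abs|].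
    apply rsum_le. intros h Hh. destruct (SS i h) eqn:E.
    - replace (st s h / b i h - st t' h / b i h) with (/ b i h * (st s h - st t' h)) by (unfold Rdiv; ring).
      rewrite Rabs_mult, Rabs_right. apply Rmult_le_compat_l. apply Rlt_le, Rinv_0_lt_compat, Hb; auto.
      apply Hdq; auto. apply Rle_ge, Rlt_le, Rinv_0_lt_compat, Hb; auto.
    - rewrite Rminus_0_r, Rabs_R0. lra. }
  assert (HErr : forall T j k t', (j<n)%nat -> u j k <= T -> tau j k < t' <= u j k ->
     pi j k * Rabs (xd n m SS b e (st t') j - xd n m SS b e (st (u j k)) j) <=
     lambda * (23/21) * ErrF T (fun h k' => Rabs (mm h k')) j k).
  { intros T j k t' Hj HuT [Ht1 Ht2].
    pose proof (Htau0 j k Hj) as Htj.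
    assert (Hqj : st t' j = pi j k) by (unfold st; rewrite (HNwin j k t'); auto).
    unfold xd. rewrite <- rsum_minus.
    eapply Rle_trans. apply Rmult_le_compat_l. apply Rlt_le, Hpipos; auto. apply rsum_abs.
    rewrite <- rsum_scal. unfold ErrF. rewrite <- rsum_scal. apply rsum_le. intros i Hi.
    destruct (SS i j) eqn:E; [|rewrite Rminus_0_r, Rabs_R0; lra].
    set (q := st (u j k)) in *. set (q' := st t') in *.
    set (W := Wt n (SS i) (b i) q). set (W' := Wt n (SS i) (b i) q').
    assert (HW : 0 < W) by (apply HWpos; auto; apply Hpos; apply Rlt_le, Hupos; auto).
    assert (HW' : 0 < W') by (apply HWpos; auto; apply Hpos; lra).
    assert (HWW : W * (21/23) <= W') by (apply (HWratio i t' (u j k)); auto; try lra; pose proof (Htault j k Hj); pose proof (HDl j k Hj); unfold Dl in *; lra).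
    assert (Hbij := Hb i j Hi Hj E). assert (Hei := He i Hi). assert (Hpk := Hpipos j k Hj).
    set (A := rsum n (fun h => if SS i h then / b i h * rsum (N h T) (fun k' => indR (t' <= u h k' < u j k) (pi h k' * Rabs (a h k'))) else 0)).
    assert (HA : Rabs (W - W') <= A) by (apply HWdiff; auto; lra).
    assert (HAI : A <= lambda * W * Inner T i j k (fun h k' => Rabs (mm h k'))).
    { unfold A, Inner. rewrite <- rsum_scal. apply rsum_le. intros h Hh. destruct (SS i h) eqn:Eh; [|lra].
      rewrite <- rsum_scal, <- rsum_scal. apply rsum_le. intros k' Hk'.
      assert (Hbih := Hb i h Hi Hh Eh).
      rewrite indR_scal, indR_scal. apply indR_mono. intros [? ?]; split; lra.
      - assert (0 < pi h k' / (b i h * W)) by (apply Rdiv_lt_0_compat; [apply Hpipos; auto| nra]).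
        pose proof (HDl h k' Hh). pose proof (Rabs_pos (mm h k')).
        apply Rmult_le_pos; [apply Rmult_le_pos; lra|]. fold q W. apply Rmult_le_pos; [apply Rmult_le_pos; [lra|apply Rabs_pos]|lra].
      - intros _. unfold a. fold q W. rewrite Rabs_mult, Rabs_mult, (Rabs_right lambda), (Rabs_right (Dl h k')) by (try apply Rle_ge, Rlt_le, HDl; auto; lra).
        right. field. split; lra. }
    assert (Hterm : pi j k * Rabs (e i / (b i j * W') - e i / (b i j * W)) = e i * (pi j k / (b i j * W)) * (Rabs (W - W') / W')).
    { replace (e i / (b i j * W') - e i / (b i j * W)) with ((e i * (pi j k / (b i j * W)) / pi j k / W') * (W - W')) by (field; repeat split; lra).
      assert (0 < e i * (pi j k / (b i j * W)) / pi j k / W').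
      { apply Rdiv_lt_0_compat; auto. apply Rdiv_lt_0_compat; auto. apply Rmult_lt_0_compat; auto. apply Rdiv_lt_0_compat; nra. }
      rewrite Rabs_mult, (Rabs_right (e i * (pi j k / (b i j * W)) / pi j k / W')) by lra.
      field; repeat split; lra. }
    unfold wgt. fold q W. rewrite Hterm.
    set (w := pi j k / (b i j * W)).
    assert (Hw : 0 < w) by (apply Rdiv_lt_0_compat; nra).
    assert (Rabs (W - W') / W' <= (23/21) * Rabs (W - W') / W).
    { apply Rmult_le_reg_r with (W * W'). nra. pose proof (Rabs_pos (W - W')). field_simplify; try lra. nra. }
    assert (Rabs (W - W') / W <= lambda * Inner T i j k (fun h k' => Rabs (mm h k'))).
    { apply Rmult_le_reg_r with W; auto. field_simplify; lra. }
    assert (Hq : q j = pi j k) by (unfold q, st; rewrite HNu; auto). rewrite Hq. fold w.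
    assert (0 <= e i * w) by nra.
    assert (Rabs (W - W') / W' <= lambda * (23/21) * Inner T i j k (fun h k' => Rabs (mm h k'))).
    { eapply Rle_trans; [eassumption|]. unfold Rdiv in *. nra. }
    assert (e i * w * (Rabs (W - W') / W') <= e i * w * (lambda * (23/21) * Inner T i j k (fun h k' => Rabs (mm h k')))) by (apply Rmult_le_compat_l; auto).
    lra. }
  assert (Hxdrat : forall j t1 s, (j<n)%nat -> 0 <= t1 <= s -> s <= t1 + 1 ->
     21/23 * xd n m SS b e (st s) j <= xd n m SS b e (st t1) j).
  { intros j t1 s' Hj Ht Hs. unfold xd. rewrite <- rsum_scal. apply rsum_le. intros i Hi.
    destruct (SS i j) eqn:E; [|lra].
    destruct (HWratio i t1 s' Hi Ht Hs) as [W1 W2].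
    assert (0 < Wt n (SS i) (b i) (st t1)) by (apply HWpos; auto; apply Hpos; lra).
    assert (0 < Wt n (SS i) (b i) (st s')) by (apply HWpos; auto; apply Hpos; lra).
    pose proof (Hb i j Hi Hj E). pose proof (He i Hi).
    unfold Rdiv. rewrite !Rinv_mult.
    assert (0 < / b i j) by (apply Rinv_0_lt_compat; auto).
    assert (/ Wt n (SS i) (b i) (st s') * (21/23) <= / Wt n (SS i) (b i) (st t1)).
    { apply Rmult_le_reg_r with (Wt n (SS i) (b i) (st s') * Wt n (SS i) (b i) (st t1)). nra.
      field_simplify; lra. }
    assert (0 < e i * / b i j) by nra. nra. }
  set (xq := fun j k => xd n m SS b e (st (u j k)) j).
  assert (HDU : forall T j k, (j<n)%nat -> u j k <= T ->
     Dphi j k <= lambda * Dl j k * pi j k * (- (mm j k * mm j k) / 2 - 21/92 * (mm j k * mm j k) * xq j k)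
        + 23/22 * (lambda * lambda) * Dl j k * (mm j k * mm j k) * pi j k * xq j k
        + lambda * lambda * (23/21) * Dl j k * Rabs (mm j k) * ErrF T (fun h k' => Rabs (mm h k')) j k).
  { intros T j k Hj HuT.
    set (q := st (u j k)).
    assert (Hqj : q j = pi j k) by (unfold q, st; rewrite HNu; auto).
    assert (Hqpos : forall h, (h<n)%nat -> 0 < q h) by (intros; apply Hpos; auto; apply Rlt_le, Hupos; auto).
    pose proof (HDl j k Hj) as HD. pose proof (Hmm j k Hj) as Hm. pose proof (Hpipos j k Hj) as Hp.
    assert (Ha : -1/23 <= a j k <= 1/23).
    { pose proof (Habsa j k Hj). pose proof (HDl j k Hj). pose proof (Rle_abs (a j k)). pose proof (Rle_abs (- a j k)). rewrite Rabs_Ropp in *. nra. }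
    assert (Hup := phi_update n m SS b e q j (a j k) HS Hb He Hqpos Hj Ha).
    assert (Dphi j k = phi n m SS b e (upd q j (q j * (1 + a j k))) - phi n m SS b e q).
    { unfold Dphi. fold q. rewrite Hqj, Hpistep; auto. }
    rewrite H. clear H. rewrite Hqj in Hup. fold (xq j k) in Hup.
    destruct (HZt j k Hj) as [t1 [t2 [H1 [H2 [H3 [H4 [H5 H6]]]]]]].
    pose proof (Htau0 j k Hj).
    rewrite Hexc in H5, H6 by (auto; try lra; apply Hpos; lra).
    set (Ev := lambda * (23/21) * ErrF T (fun h k' => Rabs (mm h k')) j k).
    assert (E1 := HErr T j k t1 Hj HuT ltac:(lra)). assert (E2 := HErr T j k t2 Hj HuT ltac:(lra)).
    fold q xq in E1, E2. fold (xq j k) in E1, E2. fold Ev in E1, E2.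
    set (x := xq j k) in *. set (x1 := xd n m SS b e (st t1) j) in *. set (x2 := xd n m SS b e (st t2) j) in *.
    set (Z := Zt j k) in *. set (mk := mm j k) in *.
    assert (Hdiff : pi j k * Rabs (Z + 1 - x) <= Ev).
    { destruct (Rle_dec x (Z+1)).
      - rewrite Rabs_right by lra. apply Rle_trans with (pi j k * Rabs (x2 - x)); auto.
        apply Rmult_le_compat_l; [lra|]. rewrite Rabs_right; lra.
      - rewrite Rabs_left1 by lra. apply Rle_trans with (pi j k * Rabs (x1 - x)); auto.
        apply Rmult_le_compat_l; [lra|]. rewrite Rabs_left1; lra. }
    assert (Hx1 : 21/23 * x <= x1).
    { unfold x, xq, x1. fold q. apply Hxdrat; auto. lra. unfold Dl in HD. lra. }
    assert (Hx0 : 0 <= x) by (apply Hxd0; auto).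
    assert (HmZ : mk = Rmin Z 1) by reflexivity.
    assert (HG1 : mk * mk <= mk * Z /\ mk * mk * (Z + 1) / 2 <= mk * Z).
    { rewrite HmZ. unfold Rmin. destruct Rle_dec; split; nra. }
    assert (HG2 : mk * mk / 2 + 21/92 * (mk*mk) * x <= mk * Z).
    { assert (mk * mk * (21/23 * x) <= mk * mk * (Z + 1)) by (apply Rmult_le_compat_l; nra). nra. }
    unfold a in Hup. fold mk in Hup.
    assert (Hcross : lambda * Dl j k * pi j k * mk * (Z + 1 - x) <= lambda * Dl j k * Rabs mk * Ev).
    { assert (pi j k * mk * (Z + 1 - x) <= Rabs mk * Ev).
      { rewrite Rmult_assoc. assert (mk * (Z + 1 - x) <= Rabs mk * Rabs (Z + 1 - x)) by (rewrite <- Rabs_mult; apply Rle_abs).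
        pose proof (Rabs_pos mk). nra. }
      assert (0 <= lambda * Dl j k) by nra. nra. }
    assert (Hsq : (lambda * mk * Dl j k) * (lambda * mk * Dl j k) <= lambda * lambda * Dl j k * (mk * mk)).
    { assert (0 <= mk*mk) by nra. assert (0 <= lambda * lambda) by nra.
      replace ((lambda * mk * Dl j k) * (lambda * mk * Dl j k)) with ((lambda*lambda) * (mk*mk) * (Dl j k * Dl j k)) by ring.
      replace (lambda * lambda * Dl j k * (mk * mk)) with ((lambda*lambda) * (mk*mk) * (Dl j k)) by ring.
      apply Rmult_le_compat_l; nra. }
    assert (23/22 * ((lambda * mk * Dl j k) * (lambda * mk * Dl j k)) * pi j k * x <= 23/22 * (lambda * lambda) * Dl j k * (mk * mk) * pi j k * x).
    { assert (0 <= pi j k * x) by nra.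
      replace (23/22 * ((lambda * mk * Dl j k) * (lambda * mk * Dl j k)) * pi j k * x) with (23/22 * ((lambda * mk * Dl j k) * (lambda * mk * Dl j k)) * (pi j k * x)) by ring.
      replace (23/22 * (lambda * lambda) * Dl j k * (mk * mk) * pi j k * x) with (23/22 * (lambda * lambda * Dl j k * (mk * mk)) * (pi j k * x)) by ring.
      apply Rmult_le_compat_r; lra. }
    assert (lambda * Dl j k * pi j k * (mk * Z) >= lambda * Dl j k * pi j k * (mk * mk / 2 + 21/92 * (mk*mk) * x)).
    { apply Rle_ge, Rmult_le_compat_l; [|lra]. assert (0 < lambda * Dl j k) by nra. nra. }
    unfold Ev in Hcross.
    assert (- (lambda * mk * Dl j k) * pi j k * (x - 1) = - (lambda * Dl j k * pi j k * (mk * Z)) + lambda * Dl j k * pi j k * mk * (Z + 1 - x)) by ring.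
    rewrite Hqj. unfold a. fold mk. change (xd n m SS b e q j) with x in Hup. unfold Ev in *. lra. }
  assert (HIscal : forall T i j k f c, c * Inner T i j k f = Inner T i j k (fun h k' => c * f h k')).
  { intros. unfold Inner. rewrite <- rsum_scal. apply rsum_ext. intros h Hh. destruct (SS i h); [|ring].
    rewrite <- rsum_scal. apply rsum_ext. intros k' Hk'. rewrite indR_scal. f_equal. ring. }
  assert (HIplus : forall T i j k f g, Inner T i j k f + Inner T i j k g = Inner T i j k (fun h k' => f h k' + g h k')).
  { intros. unfold Inner. rewrite <- rsum_plus. apply rsum_ext. intros h Hh. destruct (SS i h); [|ring].
    rewrite <- rsum_plus. apply rsum_ext. intros k' Hk'. unfold indR. destruct excluded_middle_informative; ring. }
  assert (HImono : forall T i j k f g, (i<m)%nat -> (j<n)%nat -> (forall h k', (h<n)%nat -> f h k' <= g h k') ->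
     Inner T i j k f <= Inner T i j k g).
  { intros T i j k f g Hi Hj Hfg. unfold Inner. apply rsum_le. intros h Hh. destruct (SS i h) eqn:E; [|lra].
    apply rsum_le. intros k' Hk'. apply indR_mono_same.
    - intros _. assert (0 < pi h k' / (b i h * Wt n (SS i) (b i) (st (u j k)))).
      { apply Rdiv_lt_0_compat. apply Hpipos; auto. apply Rmult_lt_0_compat. apply Hb; auto.
        apply HWpos; auto. apply Hpos. apply Rlt_le, Hupos; auto. }
      pose proof (HDl h k' Hh). specialize (Hfg h k' Hh).
      apply Rmult_le_compat_r; [lra|]. apply Rmult_le_compat_l; lra. }
  assert (Hwpos : forall i j k, (i<m)%nat -> (j<n)%nat -> SS i j = true -> 0 < wgt n (SS i) (b i) (st (u j k)) j).
  { intros i j k Hi Hj E. apply (wgt_le1 n (SS i) (b i) (st (u j k)) j Hj E (Hb i j Hi Hj E) (fun k Hk => Hb i k Hi Hk)).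
    intros; apply Hpos; auto; apply Rlt_le, Hupos; auto. }
  assert (HAM : forall T j k, (j<n)%nat ->
     Rabs (mm j k) * ErrF T (fun h k' => Rabs (mm h k')) j k <=
     (mm j k * mm j k) / 2 * ErrF T (fun _ _ => 1) j k + 1/2 * ErrF T (fun h k' => mm h k' * mm h k') j k).
  { intros T j k Hj. unfold ErrF. rewrite <- !rsum_scal, <- rsum_plus. apply rsum_le. intros i Hi.
    destruct (SS i j) eqn:E; [|lra].
    assert (0 <= e i * wgt n (SS i) (b i) (st (u j k)) j) by (apply Rlt_le, Rmult_lt_0_compat; auto).
    set (c := e i * wgt n (SS i) (b i) (st (u j k)) j) in *.
    assert (Rabs (mm j k) * Inner T i j k (fun h k' => Rabs (mm h k')) <=
            (mm j k * mm j k) / 2 * Inner T i j k (fun _ _ => 1) + 1/2 * Inner T i j k (fun h k' => mm h k' * mm h k')).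
    { rewrite HIscal, HIscal, HIscal, HIplus. apply HImono; auto. intros h k' Hh.
      assert (Rabs (mm h k') * Rabs (mm h k') = mm h k' * mm h k') by (rewrite <- Rabs_mult; apply Rabs_right; nra).
      assert (Rabs (mm j k) * Rabs (mm j k) = mm j k * mm j k) by (rewrite <- Rabs_mult; apply Rabs_right; nra).
      pose proof (Rle_0_sqr (Rabs (mm j k) - Rabs (mm h k'))). unfold Rsqr in *. lra. }
    assert (c * (Rabs (mm j k) * Inner T i j k (fun h k' => Rabs (mm h k'))) <=
            c * ((mm j k * mm j k) / 2 * Inner T i j k (fun _ _ => 1) + 1/2 * Inner T i j k (fun h k' => mm h k' * mm h k'))) by
      (apply Rmult_le_compat_l; auto).
    lra. }
  assert (HB1 : forall T j k, (j<n)%nat -> u j k <= T -> ErrF T (fun _ _ => 1) j k <= 2 * (23/21) * pi j k * xq j k).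
  { intros T j k Hj HuT.
    assert (Hq : st (u j k) j = pi j k) by (unfold st; rewrite HNu; auto).
    unfold xq. rewrite <- Hq at 1. rewrite Rmult_assoc, xd_ident. rewrite <- rsum_scal. unfold ErrF. apply rsum_le.
    intros i Hi. destruct (SS i j) eqn:E; [|lra].
    assert (0 < e i * wgt n (SS i) (b i) (st (u j k)) j) by (apply Rmult_lt_0_compat; auto).
    assert (Inner T i j k (fun _ _ => 1) <= 2 * (23/21)); [|nra].
    set (W := Wt n (SS i) (b i) (st (u j k))).
    assert (HW : 0 < W) by (apply HWpos; auto; apply Hpos; apply Rlt_le, Hupos; auto).
    unfold Inner. fold W.
    apply Rle_trans with (rsum n (fun h => if SS i h then 2 * (23/21) * (st (u j k) h / b i h / W) else 0)).
    - apply rsum_le. intros h Hh. destruct (SS i h) eqn:Eh; [|lra].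
      assert (Hbih := Hb i h Hi Hh Eh).
      apply Rle_trans with (rsum (N h T) (fun k' => (23/21) * (st (u j k) h / b i h / W) * indR (tau j k <= u h k' < u j k) (Dl h k'))).
      + apply rsum_le. intros k' Hk'. rewrite indR_scal. apply indR_mono. intros [? ?]; split; lra.
        * apply Rmult_le_pos. apply Rmult_le_pos. lra. apply Rlt_le, Rdiv_lt_0_compat; [|lra]. apply Rdiv_lt_0_compat; auto.
          apply Hpos; auto. apply Rlt_le, Hupos; auto. apply Rlt_le, HDl; auto.
        * intros [Hw1 Hw2]. pose proof (HDl j k Hj) as HDj. unfold Dl in HDj.
          destruct (Hratio h (u h k') (u j k) Hh ltac:(split; [apply Rlt_le, Hupos; auto|lra]) ltac:(lra)) as [R1 R2].
          unfold st at 1 in R1. rewrite HNu in R1 by auto.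
          pose proof (HDl h k' Hh).
          assert (pi h k' / (b i h * W) <= 23/21 * (st (u j k) h / b i h / W)).
          { replace (pi h k' / (b i h * W)) with (pi h k' / b i h / W) by (field; split; lra).
            unfold Rdiv. assert (0 < / b i h) by (apply Rinv_0_lt_compat; lra). assert (0 < / W) by (apply Rinv_0_lt_compat; lra).
            assert (pi h k' <= 23/21 * st (u j k) h) by lra.
            assert (pi h k' * / b i h <= 23/21 * st (u j k) h * / b i h) by (apply Rmult_le_compat_r; lra).
            assert (pi h k' * / b i h * / W <= 23/21 * st (u j k) h * / b i h * / W) by (apply Rmult_le_compat_r; lra).
            lra. }
          rewrite Rmult_1_r. apply Rmult_le_compat_r; lra.
      + rewrite rsum_scal. pose proof (Hwin h (tau j k) (u j k) (N h T) Hh).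
        pose proof (HDl j k Hj) as HDj. unfold Dl in HDj.
        assert (Rmax 0 (u j k - tau j k + 1) <= 2) by (unfold Rmax; destruct Rle_dec; lra).
        assert (0 <= (23/21) * (st (u j k) h / b i h / W)).
        { apply Rmult_le_pos. lra. apply Rlt_le, Rdiv_lt_0_compat; [|lra]. apply Rdiv_lt_0_compat; auto.
          apply Hpos; auto. apply Rlt_le, Hupos; auto. }
        nra.
    - right. transitivity (2 * (23/21) * (rsum n (fun h => if SS i h then st (u j k) h / b i h else 0) / W)).
      + replace (rsum n (fun h => if SS i h then st (u j k) h / b i h else 0) / W) with (rsum n (fun h => if SS i h then st (u j k) h / b i h else 0) * / W) by reflexivity.
        rewrite <- rsum_scal_r, <- rsum_scal. apply rsum_ext. intros h Hh. destruct (SS i h); [unfold Rdiv; ring|ring].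
      + fold (Wt n (SS i) (b i) (st (u j k))). fold W. field. lra. }
  assert (HC : forall T, 0 < T ->
     rsum n (fun j => rsum (N j T) (fun k => Dl j k * ErrF T (fun h k' => mm h k' * mm h k') j k)) <=
     (23/21) * (23/21) * rsum n (fun h => rsum (N h T) (fun k' => mm h k' * mm h k' * Dl h k' * pi h k' * xq h k'))).
  { intros T HT.
    set (F1 := fun j k i h k' => if SS i j then (if SS i h then
        indR (tau j k < u h k' < u j k) (Dl j k * (e i * wgt n (SS i) (b i) (st (u j k)) j) *
           (pi h k' / (b i h * Wt n (SS i) (b i) (st (u j k))) * (mm h k' * mm h k') * Dl h k')) else 0) else 0).
    set (F2 := fun j k i h k' => if SS i j then (if SS i h then
        indR (tau j k < u h k' < u j k) (Dl j k) * ((23/21) * (23/21) * (e i * wgt n (SS i) (b i) (st (u h k')) j *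
           wgt n (SS i) (b i) (st (u h k')) h * (mm h k' * mm h k') * Dl h k')) else 0) else 0).
    assert (S1 : rsum n (fun j => rsum (N j T) (fun k => Dl j k * ErrF T (fun h k' => mm h k' * mm h k') j k)) =
       rsum n (fun j => rsum (N j T) (fun k => rsum m (fun i => rsum n (fun h => rsum (N h T) (fun k' => F1 j k i h k')))))).
    { apply rsum_ext; intros j Hj; apply rsum_ext; intros k Hk. unfold ErrF. rewrite <- rsum_scal. apply rsum_ext. intros i Hi.
      unfold F1, Inner. destruct (SS i j).
      2:{ rewrite (rsum_ext n _ (fun _ => 0)). rewrite rsum_zero; ring. intros; apply rsum_zero. }
      rewrite <- !rsum_scal. apply rsum_ext. intros h Hh. destruct (SS i h); [|rewrite rsum_zero; ring].
      rewrite <- !rsum_scal. apply rsum_ext. intros k' Hk'. rewrite !indR_scal. f_equal. ring. }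
    rewrite S1. clear S1.
    assert (S2 : rsum n (fun j => rsum (N j T) (fun k => rsum m (fun i => rsum n (fun h => rsum (N h T) (fun k' => F1 j k i h k'))))) <=
       rsum n (fun j => rsum (N j T) (fun k => rsum m (fun i => rsum n (fun h => rsum (N h T) (fun k' => F2 j k i h k')))))).
    { apply rsum_le; intros j Hj; apply rsum_le; intros k Hk; apply rsum_le; intros i Hi; apply rsum_le; intros h Hh; apply rsum_le; intros k' Hk'.
      unfold F1, F2. destruct (SS i j) eqn:Eij; [|lra]. destruct (SS i h) eqn:Eih; [|lra].
      destruct (excluded_middle_informative (tau j k < u h k' < u j k)) as [Hw|Hw].
      2:{ rewrite !indR_F by auto. lra. }
      rewrite !indR_T by auto.
      assert (Hu1 : u j k <= u h k' + 1) by (pose proof (HDl j k Hj); unfold Dl in *; lra).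
      assert (HuV : 0 <= u h k') by (apply Rlt_le, Hupos; auto).
      assert (HuU : u j k <= T) by (apply Rlt_le, HN; auto).
      assert (HqUj : st (u j k) j = pi j k) by (unfold st; rewrite HNu; auto).
      assert (HqVj : st (u h k') j = pi j k) by (unfold st; rewrite (HNwin j k (u h k')); auto; lra).
      assert (HqVh : st (u h k') h = pi h k') by (unfold st; rewrite HNu; auto).
      destruct (HWratio i (u h k') (u j k) Hi ltac:(lra) Hu1) as [WR _].
      set (WU := Wt n (SS i) (b i) (st (u j k))) in *. set (WV := Wt n (SS i) (b i) (st (u h k'))) in *.
      assert (HWU : 0 < WU) by (apply HWpos; auto; apply Hpos; lra).
      assert (HWV : 0 < WV) by (apply HWpos; auto; apply Hpos; lra).
      unfold wgt. fold WU WV. rewrite HqUj, HqVj, HqVh.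
      pose proof (Hb i j Hi Hj Eij). pose proof (Hb i h Hi Hh Eih). pose proof (He i Hi).
      pose proof (Hpipos j k Hj). pose proof (Hpipos h k' Hh). pose proof (HDl j k Hj). pose proof (HDl h k' Hh).
      assert (Hinv : / WU <= 23/21 * / WV).
      { apply Rmult_le_reg_r with (WU * WV). nra. field_simplify; lra. }
      assert (Hinv2 : / WU * / WU <= (23/21) * (23/21) * (/ WV * / WV)).
      { assert (0 < / WU) by (apply Rinv_0_lt_compat; lra). nra. }
      set (K := Dl j k * e i * (pi j k * / b i j) * (pi h k' * / b i h) * (mm h k' * mm h k') * Dl h k').
      assert (HK : 0 <= K).
      { unfold K. assert (0 <= mm h k' * mm h k') by nra.
        assert (0 < / b i j) by (apply Rinv_0_lt_compat; lra). assert (0 < / b i h) by (apply Rinv_0_lt_compat; lra).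
        apply Rmult_le_pos; [|lra]. apply Rmult_le_pos; [|lra]. apply Rmult_le_pos; [|nra]. apply Rmult_le_pos; [|nra]. apply Rmult_le_pos; lra. }
      replace (Dl j k * (e i * (pi j k / (b i j * WU))) * (pi h k' / (b i h * WU) * (mm h k' * mm h k') * Dl h k'))
        with (K * (/ WU * / WU)) by (unfold K; field; repeat split; lra).
      replace (Dl j k * (23 / 21 * (23 / 21) * (e i * (pi j k / (b i j * WV)) * (pi h k' / (b i h * WV)) * (mm h k' * mm h k') * Dl h k')))
        with (K * ((23/21) * (23/21) * (/ WV * / WV))) by (unfold K; field; repeat split; lra).
      apply Rmult_le_compat_l; auto. }
    eapply Rle_trans; [exact S2|]. clear S2. rewrite rsum5_comm.
    rewrite <- rsum_scal. apply rsum_le. intros h Hh. rewrite <- rsum_scal. apply rsum_le. intros k' Hk'.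
    set (qV := st (u h k')).
    assert (HqV : forall g, (g<n)%nat -> 0 < qV g) by (intros; apply Hpos; auto; apply Rlt_le, Hupos; auto).
    assert (HqVh : qV h = pi h k') by (unfold qV, st; rewrite HNu; auto).
    assert (Hmm0 : 0 <= mm h k' * mm h k') by nra.
    pose proof (HDl h k' Hh) as HDV.
    apply Rle_trans with (rsum m (fun i => if SS i h then (23/21) * (23/21) * (e i * wgt n (SS i) (b i) qV h * (mm h k' * mm h k') * Dl h k') else 0)).
    - apply rsum_le. intros i Hi. destruct (SS i h) eqn:Eih.
      + set (C := fun j => (23/21) * (23/21) * (e i * wgt n (SS i) (b i) qV j * wgt n (SS i) (b i) qV h * (mm h k' * mm h k') * Dl h k')).
        assert (HC0 : forall j, (j<n)%nat -> SS i j = true -> 0 <= C j).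
        { intros j Hj Eij. unfold C. pose proof (He i Hi).
          pose proof (wgt_le1 n (SS i) (b i) qV j Hj Eij (Hb i j Hi Hj Eij) (fun k Hk => Hb i k Hi Hk) HqV).
          pose proof (wgt_le1 n (SS i) (b i) qV h Hh Eih (Hb i h Hi Hh Eih) (fun k Hk => Hb i k Hi Hk) HqV).
          apply Rmult_le_pos; [lra|]. apply Rmult_le_pos; [|lra]. apply Rmult_le_pos; [|lra]. apply Rmult_le_pos; [|lra]. apply Rmult_le_pos; lra. }
        apply Rle_trans with (rsum n (fun j => if SS i j then C j else 0)).
        * apply rsum_le. intros j Hj. unfold F2. destruct (SS i j) eqn:Eij.
          -- rewrite Eih. rewrite rsum_scal_r.
             pose proof (Hone j (u h k') (N j T) Hj). pose proof (HC0 j Hj Eij).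
             replace (rsum (N j T) (fun k => indR (tau j k < u h k' < u j k) (Dl j k))) with
                     (rsum (N j T) (fun k => indR (tau j k < u h k' < u j k) (Dl j k))) by reflexivity.
             change (st (u h k')) with qV. unfold C in H0. set (Y := 23 / 21 * (23 / 21) * (e i * wgt n (SS i) (b i) qV j * wgt n (SS i) (b i) qV h * (mm h k' * mm h k') * Dl h k')) in *.
             set (Xs := rsum (N j T) (fun k => indR (tau j k < u h k' < u j k) (Dl j k))) in *. unfold C. fold Y. nra.
          -- rewrite rsum_zero. lra.
        * right. transitivity ((23/21) * (23/21) * (e i * wgt n (SS i) (b i) qV h * (mm h k' * mm h k') * Dl h k') *
             rsum n (fun j => if SS i j then wgt n (SS i) (b i) qV j else 0)).
          -- rewrite <- rsum_scal. apply rsum_ext. intros j Hj. unfold C. destruct (SS i j); ring.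
          -- replace (rsum n (fun j => if SS i j then wgt n (SS i) (b i) qV j else 0)) with 1. ring.
             assert (HW : 0 < Wt n (SS i) (b i) qV) by (apply HWpos; auto).
             transitivity (Wt n (SS i) (b i) qV / Wt n (SS i) (b i) qV). field; lra.
             unfold Rdiv at 1. unfold Wt at 1. rewrite <- rsum_scal_r. apply rsum_ext. intros j Hj. unfold wgt.
             destruct (SS i j) eqn:Eij; [|ring]. field. split; [lra|]. apply Rgt_not_eq, Hb; auto.
      + unfold F2. rewrite Eih. rewrite (rsum_ext n _ (fun _ => 0)). rewrite rsum_zero; lra.
        intros j Hj. destruct (SS i j); apply rsum_zero.
    - right. unfold xq. fold qV. rewrite <- HqVh.
      transitivity ((23/21) * (23/21) * (mm h k' * mm h k') * Dl h k' * rsum m (fun i => if SS i h then e i * wgt n (SS i) (b i) qV h else 0)).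
      + rewrite <- rsum_scal. apply rsum_ext. intros i Hi. destruct (SS i h); ring.
      + rewrite <- xd_ident. ring. }
  assert (Hxq0 : forall j k, (j<n)%nat -> 0 <= xq j k) by (intros; apply Hxd0; auto; intros; apply Hpos; auto; apply Rlt_le, Hupos; auto).
  assert (HSum : forall T, 0 < T -> phi n m SS b e (st T) - phi n m SS b e p0 <=
     - (lambda / 2) * rsum n (fun g => rsum (N g T) (fun k => Dl g k * pi g k * (mm g k * mm g k)))).
  { intros T HT. rewrite (Htel _ T HT eq_refl).
    set (Kc := - 21/92 * lambda + lambda * lambda * (23/22 + (23/21) * (23/21))).
    set (Gd := fun j k => - (lambda / 2) * (Dl j k * pi j k * (mm j k * mm j k)) + Kc * (mm j k * mm j k * Dl j k * pi j k * xq j k)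
                  + lambda * lambda * (23/21) / 2 * (Dl j k * ErrF T (fun h k' => mm h k' * mm h k') j k)).
    apply Rle_trans with (rsum n (fun g => rsum (N g T) (Gd g))).
    - apply rsum_le. intros j Hj. apply rsum_le. intros k Hk.
      assert (HuT : u j k <= T) by (apply Rlt_le, HN; auto).
      pose proof (HDU T j k Hj HuT). pose proof (HAM T j k Hj). pose proof (HB1 T j k Hj HuT).
      pose proof (HDl j k Hj). pose proof (Hpipos j k Hj). pose proof (Hxq0 j k Hj).
      assert (Hm0 : 0 <= mm j k * mm j k) by nra.
      set (E1 := ErrF T (fun _ _ => 1) j k) in *. set (E2 := ErrF T (fun h k' => mm h k' * mm h k') j k) in *.
      set (E3 := ErrF T (fun h k' => Rabs (mm h k')) j k) in *.
      assert (Hb3 : Rabs (mm j k) * E3 <= (mm j k * mm j k) * (23/21) * pi j k * xq j k + 1/2 * E2).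
      { assert ((mm j k * mm j k) / 2 * E1 <= (mm j k * mm j k) / 2 * (2 * (23/21) * pi j k * xq j k)) by (apply Rmult_le_compat_l; lra).
        lra. }
      assert (0 <= lambda * lambda * (23/21) * Dl j k) by (apply Rmult_le_pos; [nra|lra]).
      assert (lambda * lambda * (23 / 21) * Dl j k * Rabs (mm j k) * E3 <= lambda * lambda * (23 / 21) * Dl j k *
               ((mm j k * mm j k) * (23/21) * pi j k * xq j k + 1/2 * E2)).
      { rewrite Rmult_assoc. apply Rmult_le_compat_l; auto. }
      unfold Gd, Kc. fold E2. lra.
    - unfold Gd. rewrite (rsum_ext n _ (fun g => - (lambda/2) * rsum (N g T) (fun k => Dl g k * pi g k * (mm g k * mm g k))
          + Kc * rsum (N g T) (fun k => mm g k * mm g k * Dl g k * pi g k * xq g k)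
          + lambda * lambda * (23/21) / 2 * rsum (N g T) (fun k => Dl g k * ErrF T (fun h k' => mm h k' * mm h k') g k))).
      2:{ intros g Hg. rewrite !rsum_plus, !rsum_scal. ring. }
      rewrite !rsum_plus, !rsum_scal.
      pose proof (HC T HT).
      set (SA := rsum n (fun g => rsum (N g T) (fun k => mm g k * mm g k * Dl g k * pi g k * xq g k))) in *.
      assert (0 <= SA).
      { apply rsum_nonneg. intros g Hg. apply rsum_nonneg. intros k Hk. pose proof (HDl g k Hg). pose proof (Hpipos g k Hg).
        pose proof (Hxq0 g k Hg). assert (0 <= mm g k * mm g k) by nra.
        apply Rmult_le_pos; [|lra]. apply Rmult_le_pos; [|lra]. apply Rmult_le_pos; lra. }
      assert (Kc + lambda * lambda * (23/21) / 2 * ((23/21) * (23/21)) <= 0).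
      { unfold Kc. assert (lambda * (23/22 + (23/21)*(23/21) + (23/21)*(23/21)*(23/21)/2) <= 21/92).
        { apply Rle_trans with (1/23 * (23/22 + (23/21)*(23/21) + (23/21)*(23/21)*(23/21)/2)). apply Rmult_le_compat_r; lra. lra. }
        nra. }
      assert (0 <= lambda * lambda * (23/21) / 2) by nra.
      set (SB := rsum n (fun g => rsum (N g T) (fun k => Dl g k * ErrF T (fun h k' => mm h k' * mm h k') g k))) in *.
      assert (lambda * lambda * (23/21) / 2 * SB <= lambda * lambda * (23/21) / 2 * ((23/21) * (23/21) * SA)) by (apply Rmult_le_compat_l; auto).
      nra. }
  set (Sp := fun T => rsum n (fun g => rsum (N g T) (fun k => Dl g k * pi g k * (mm g k * mm g k)))).
  assert (Hterm0 : forall g k, (g<n)%nat -> 0 <= Dl g k * pi g k * (mm g k * mm g k)).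
  { intros g k Hg. pose proof (HDl g k Hg). pose proof (Hpipos g k Hg). assert (0 <= mm g k * mm g k) by nra.
    apply Rmult_le_pos; [|lra]. apply Rmult_le_pos; lra. }
  destruct (phi_lower n m SS b e HS Hb He) as [Kphi HKphi].
  set (M := 2 * (phi n m SS b e p0 - Kphi) / lambda).
  assert (HSpM : forall T, 0 < T -> Sp T <= M).
  { intros T HT. pose proof (HSum T HT). pose proof (HKphi (st T) (Hpos T ltac:(lra))).
    unfold M. apply Rmult_le_reg_l with (lambda / 2). nra. unfold Sp. field_simplify; [|lra]. fold (Sp T) in *. lra. }
  assert (HSpsplit : forall T0 T1 g, (g<n)%nat -> T0 <= T1 ->
     rsum (N g T1) (fun k => Dl g k * pi g k * (mm g k * mm g k)) =
     rsum (N g T0) (fun k => Dl g k * pi g k * (mm g k * mm g k)) +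
     rsum (N g T1) (fun k => indR (T0 <= u g k) (Dl g k * pi g k * (mm g k * mm g k)))).
  { intros T0 T1 g Hg HT. rewrite (rsum_range (N g T0) (N g T1)) by (apply HNmono; auto).
    rewrite <- rsum_plus. apply rsum_ext. intros k Hk. destruct (Nat.ltb_spec k (N g T0)).
    - rewrite indR_F. ring. assert (u g k < T0) by (apply HN; auto). lra.
    - rewrite indR_T. ring. destruct (Rle_dec T0 (u g k)); auto. assert (k < N g T0)%nat by (apply HN; auto; lra). lia. }
  assert (HSpmono : forall T0 T1, T0 <= T1 -> Sp T0 <= Sp T1).
  { intros T0 T1 HT. unfold Sp. apply rsum_le. intros g Hg. rewrite (HSpsplit T0 T1 g Hg HT).
    assert (0 <= rsum (N g T1) (fun k => indR (T0 <= u g k) (Dl g k * pi g k * (mm g k * mm g k)))).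
    { apply rsum_nonneg. intros; apply indR_nonneg; auto. }
    lra. }
  set (Bq := Bp + 1).
  assert (HBp0 : 0 <= Bp) by (unfold Bp; assert (0 <= rsum n p0) by (apply rsum_nonneg; intros; apply Rlt_le; auto); nra).
  set (eta := eps / (2 * lambda * Bq)).
  assert (Heta : 0 < eta) by (unfold eta, Bq; apply Rdiv_lt_0_compat; nra).
  set (delta := eps * eta / lambda).
  assert (Hdelta : 0 < delta) by (unfold delta; apply Rdiv_lt_0_compat; nra).
  assert (HT0 : exists T0, 0 < T0 /\ forall T1, T0 <= T1 -> Sp T1 - Sp T0 <= delta).
  { set (Ep := fun y => exists T, 0 < T /\ y = Sp T).
    assert (Hb1 : bound Ep) by (exists M; intros y [T [HT ->]]; apply HSpM; auto).
    assert (Hne : exists y, Ep y) by (exists (Sp 1); exists 1; split; auto; lra).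
    destruct (completeness Ep Hb1 Hne) as [L [HL1 HL2]].
    destruct (classic (exists T0, 0 < T0 /\ L - delta < Sp T0)) as [[T0 [HT0 HL]]|Hno].
    - exists T0. split; auto. intros T1 HT1. assert (Sp T1 <= L) by (apply HL1; exists T1; split; auto; lra). lra.
    - exfalso. assert (L <= L - delta); [|lra]. apply HL2. intros y [T [HT ->]].
      destruct (Rle_dec (Sp T) (L - delta)); auto. exfalso; apply Hno; exists T; split; auto; lra. }
  destruct HT0 as [T0 [HT0 HT0s]].
  exists T0. split; [lra|].
  intros j t dt Hj Ht Hdt0 Hdt1.
  set (T1 := t + dt + 1).
  rewrite (Hstate j t), (Hstate j (t + dt)) by (auto; lra).
  rewrite Rabs_minus_sym.
  pose proof (Hdq j t (t + dt) T1 Hj ltac:(lra) ltac:(unfold T1; lra)) as Hd. fold (st (t + dt) j) (st t j). unfold st in Hd.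
  eapply Rle_trans; [exact Hd|]. clear Hd.
  apply Rle_trans with (rsum (N j T1) (fun k => lambda * (1 / (2 * eta)) * indR (T0 <= u j k) (Dl j k * pi j k * (mm j k * mm j k)) +
        lambda * eta * Bp / 2 * indR (t <= u j k < t + dt) (Dl j k))).
  - apply rsum_le. intros k Hk. rewrite !indR_scal.
    destruct (excluded_middle_informative (t <= u j k < t + dt)) as [Hw|Hw].
    + rewrite !indR_T by (auto; lra).
      pose proof (HDl j k Hj). pose proof (Hpipos j k Hj). pose proof (HBp j k Hj). pose proof (Hmm j k Hj).
      unfold a. rewrite Rabs_mult, Rabs_mult, (Rabs_right lambda), (Rabs_right (Dl j k)) by lra.
      set (mk := mm j k) in *. set (pk := pi j k) in *. set (D := Dl j k) in *.
      assert (Rabs mk <= mk * mk / (2 * eta) + eta / 2).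
      { pose proof (Rle_0_sqr (Rabs mk - eta)). unfold Rsqr in H3.
        assert (Rabs mk * Rabs mk = mk * mk) by (rewrite <- Rabs_mult; apply Rabs_right; nra).
        apply Rmult_le_reg_l with (2 * eta). lra. field_simplify; lra. }
      assert (pk * (lambda * Rabs mk * D) <= lambda * D * pk * (mk * mk / (2 * eta) + eta / 2)).
      { replace (pk * (lambda * Rabs mk * D)) with (lambda * D * pk * Rabs mk) by ring. apply Rmult_le_compat_l; [|lra]. apply Rmult_le_pos; [|lra]. apply Rmult_le_pos; lra. }
      assert (lambda * D * pk * (eta / 2) <= lambda * D * Bp * (eta/2)).
      { apply Rmult_le_compat_r; [lra|]. apply Rmult_le_compat_l; nra. }
      assert (lambda * D * pk * (mk * mk / (2 * eta) + eta / 2) = lambda * (1 / (2 * eta)) * (D * pk * (mk * mk)) + lambda * D * pk * (eta/2)) by (field; lra).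
      lra.
    + rewrite !(indR_F (t <= u j k < t + dt)) by auto. rewrite Rplus_0_r. apply indR_nonneg.
      apply Rmult_le_pos; auto. apply Rmult_le_pos; [lra|]. apply Rlt_le, Rdiv_lt_0_compat; lra.
  - rewrite rsum_plus, !rsum_scal.
    assert (HA1 : rsum (N j T1) (fun k => indR (T0 <= u j k) (Dl j k * pi j k * (mm j k * mm j k))) <= delta).
    { assert (HT01 : T0 <= T1) by (unfold T1; lra).
      pose proof (HT0s T1 HT01). unfold Sp in H.
      assert (rsum n (fun g => rsum (N g T1) (fun k => Dl g k * pi g k * (mm g k * mm g k))) =
              rsum n (fun g => rsum (N g T0) (fun k => Dl g k * pi g k * (mm g k * mm g k))) +
              rsum n (fun g => rsum (N g T1) (fun k => indR (T0 <= u g k) (Dl g k * pi g k * (mm g k * mm g k))))).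
      { rewrite <- rsum_plus. apply rsum_ext. intros g Hg. apply HSpsplit; auto. }
      rewrite H0 in H.
      pose proof (rsum_term_le n (fun g => rsum (N g T1) (fun k => indR (T0 <= u g k) (Dl g k * pi g k * (mm g k * mm g k)))) j
         ltac:(intros; apply rsum_nonneg; intros; apply indR_nonneg; auto) Hj). simpl in H1. lra. }
    assert (HA2 : rsum (N j T1) (fun k => indR (t <= u j k < t + dt) (Dl j k)) <= 2).
    { pose proof (Hwin j t (t + dt) (N j T1) Hj). assert (Rmax 0 (t + dt - t + 1) <= 2) by (unfold Rmax; destruct Rle_dec; lra). lra. }
    assert (0 <= rsum (N j T1) (fun k => indR (t <= u j k < t + dt) (Dl j k))) by (apply rsum_nonneg; intros; apply indR_nonneg; apply Rlt_le, HDl; auto).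
    assert (lambda * (1 / (2 * eta)) * delta = eps / 2) by (unfold delta; field; lra).
    assert (lambda * eta * Bp / 2 * 2 <= eps / 2).
    { unfold eta, Bq. apply Rmult_le_reg_r with (2 * lambda * (Bp + 1)). nra. field_simplify; try lra. nra. }
    assert (0 <= lambda * (1 / (2 * eta))) by (apply Rmult_le_pos; [lra|]; apply Rlt_le, Rdiv_lt_0_compat; lra).
    assert (0 <= lambda * eta * Bp / 2) by (apply Rmult_le_pos; [|lra]; apply Rmult_le_pos; [|lra]; nra).
    assert (lambda * (1 / (2 * eta)) * rsum (N j T1) (fun k => indR (T0 <= u j k) (Dl j k * pi j k * (mm j k * mm j k))) <= lambda * (1 / (2 * eta)) * delta) by (apply Rmult_le_compat_l; auto).
    assert (lambda * eta * Bp / 2 * rsum (N j T1) (fun k => indR (t <= u j k < t + dt) (Dl j k)) <= lambda * eta * Bp / 2 * 2) by (apply Rmult_le_compat_l; auto).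
    lra.
Qed.
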